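(* Let $w\ge 4$ and $u=w-2$. Then $$\sum_{\substack{a+b+c=w\\ a\ge2,\ b,c\ge1}} T(a,b,c)=\frac23T(2)T(u)-2T(u,2)+4\Big(\zeta(u,\bar1,1)-\zeta(\bar u,1,1)+\zeta(\bar u,1,\bar1)-\zeta(u,\bar1,\bar1)\Big).$$
   Context: Multiple $T$-values: for positive integers $s_1,\dots,s_d$ with $s_1>1$, $T(s_1,\dots,s_d)=\sum_{m_1>\dots>m_d>0,\ m_j\equiv d-j+1\ (\mathrm{mod}\ 2)}\frac{2^d}{m_1^{s_1}\cdots m_d^{s_d}}$. Euler sums: $\zeta(s_1,\dots,s_d;z_1,\dots,z_d)=\sum_{n_1>\dots>n_d>0}\frac{z_1^{n_1}\cdots z_d^{n_d}}{n_1^{s_1}\cdots n_d^{s_d}}$, $z_j\in\{\pm1\}$; a bar over the $j$-th argument means $z_j=-1$, no bar means $z_j=1$. *)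

(* Defs.v *)
From Stdlib Require Import Reals List Arith.
From Coquelicot Require Import Coquelicot.
Open Scope R_scope.

(* nsum [f1;...;fd] N = sum_{N >= m1 > m2 > ... > md > 0} f1 m1 * ... * fd md *)
Fixpoint nsum (fs : list (nat -> R)) (N : nat) : R :=
  match fs with
  | nil => 1
  | f :: fs' =>
      let fix aux (n : nat) : R :=
        match n with
        | O => 0
        | S k => aux k + f (S k) * nsum fs' k
        end
      in aux N
  end.

(* Value of the iterated series: limit of the truncations at m1 <= N.
   (All series used below are absolutely convergent, so this is the sum.) *)
Definition nseries (fs : list (nat -> R)) : R :=
  real (Lim_seq (fun N => nsum fs N)).

(* Multiple T-value: factor for position j (1-indexed, j = i+1) is
   2 / m^{s_j} restricted to m ≡ d - j + 1 (mod 2). *)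
Definition Tfactor (d i s : nat) (m : nat) : R :=
  if Bool.eqb (Nat.even m) (Nat.even (d - i)) then 2 / (INR m ^ s) else 0.

Definition Tval (s : list nat) : R :=
  nseries (map (fun i => Tfactor (length s) i (nth i s O)) (seq 0 (length s))).

(* Euler sums: each argument is (s_j, barred_j); barred means z_j = -1. *)
Definition Efactor (a : nat * bool) (m : nat) : R :=
  (if snd a then (-1) ^ m else 1) / (INR m ^ fst a).

Definition Ezeta (l : list (nat * bool)) : R := nseries (map Efactor l).

(* Main.v *)
Require Import Defs.
From Stdlib Require Import Reals List Arith Lra Lia.
From Coquelicot Require Import Coquelicot.
Open Scope R_scope.


Fixpoint ssum (f : nat -> R) (n : nat) : R :=
  match n with O => 0 | S k => ssum f k + f k end.

Lemma ssum_S f n : ssum f (S n) = ssum f n + f n.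
Proof. reflexivity. Qed.

Lemma ssum_ext f g n : (forall k, (k < n)%nat -> f k = g k) -> ssum f n = ssum g n.
Proof.
  induction n; intros H; simpl; auto.
  rewrite IHn by (intros; apply H; lia). rewrite H by lia. auto.
Qed.

Lemma ssum_plus f g n : ssum (fun k => f k + g k) n = ssum f n + ssum g n.
Proof. induction n; simpl; [lra|rewrite IHn; lra]. Qed.

Lemma ssum_minus f g n : ssum (fun k => f k - g k) n = ssum f n - ssum g n.
Proof. induction n; simpl; [lra|rewrite IHn; lra]. Qed.

Lemma ssum_scal c f n : ssum (fun k => c * f k) n = c * ssum f n.
Proof. induction n; simpl; [lra|rewrite IHn; lra]. Qed.

Lemma ssum_scal_r c f n : ssum (fun k => f k * c) n = ssum f n * c.
Proof. induction n; simpl; [lra|rewrite IHn; lra]. Qed.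

Lemma ssum_zero n : ssum (fun _ => 0) n = 0.
Proof. induction n; simpl; [lra|rewrite IHn; lra]. Qed.

Lemma ssum_le f g n : (forall k, (k < n)%nat -> f k <= g k) -> ssum f n <= ssum g n.
Proof.
  induction n; intros H; simpl; [lra|].
  assert (ssum f n <= ssum g n) by (apply IHn; intros; apply H; lia).
  assert (f n <= g n) by (apply H; lia). lra.
Qed.

Lemma ssum_nonneg f n : (forall k, (k < n)%nat -> 0 <= f k) -> 0 <= ssum f n.
Proof.
  intros H. rewrite <- (ssum_zero n). apply ssum_le. auto.
Qed.

Lemma ssum_mono f n m : (forall k, 0 <= f k) -> (n <= m)%nat -> ssum f n <= ssum f m.
Proof.
  intros H Hnm. induction Hnm; [lra|]. simpl. specialize (H m). lra.
Qed.

Lemma ssum_shift f n : ssum f (S n) = f O + ssum (fun k => f (S k)) n.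
Proof. induction n; simpl in *; [lra|]. rewrite IHn. lra. Qed.

Lemma ssum_add f n m : ssum f (n + m) = ssum f n + ssum (fun k => f (n + k)%nat) m.
Proof.
  induction m; simpl. rewrite Nat.add_0_r; lra.
  rewrite Nat.add_succ_r. simpl. rewrite IHm. lra.
Qed.

Lemma ssum_rev f n : ssum (fun k => f (n - S k)%nat) n = ssum f n.
Proof.
  induction n; [reflexivity|].
  rewrite ssum_shift. rewrite ssum_S. replace (S n - 1)%nat with n by lia.
  replace (ssum (fun k : nat => f (S n - S (S k))%nat) n) with (ssum (fun k => f (n - S k)%nat) n)
    by (apply ssum_ext; intros; f_equal).
  rewrite IHn. lra.
Qed.

Lemma ssum_swap (F : nat -> nat -> R) n m :
  ssum (fun i => ssum (fun j => F i j) m) n = ssum (fun j => ssum (fun i => F i j) n) m.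
Proof.
  induction n; simpl.
  - rewrite ssum_zero. auto.
  - rewrite IHn. rewrite <- ssum_plus. auto.
Qed.

Lemma ssum_double f T : ssum f (2 * T) = ssum (fun t => f (2 * t)%nat + f (S (2 * t))) T.
Proof.
  induction T; [reflexivity|].
  replace (2 * S T)%nat with (S (S (2 * T))) by lia.
  rewrite !ssum_S, IHT. lra.
Qed.

Lemma tri_swap (F : nat -> nat -> R) T :
  ssum (fun a => ssum (fun b => F a b) (S a)) T =
  ssum (fun b => ssum (fun k => F (b + k)%nat b) (T - b)) T.
Proof.
  induction T; [reflexivity|].
  rewrite ssum_S, IHT. symmetry. rewrite ssum_S. symmetry.
  replace (ssum (fun b => ssum (fun k => F (b + k)%nat b) (S T - b)) T)
    with (ssum (fun b => ssum (fun k => F (b + k)%nat b) (T - b) + F T b) T).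
  2:{ apply ssum_ext. intros b Hb. replace (S T - b)%nat with (S (T - b)) by lia.
      simpl. f_equal. f_equal. lia. }
  rewrite ssum_plus. replace (S T - T)%nat with 1%nat by lia. simpl.
  replace (T + 0)%nat with T by lia. replace (fun b => F T b) with (F T) by reflexivity. lra.
Qed.

Lemma tri_swap_strict (F : nat -> nat -> R) T :
  ssum (fun a => ssum (fun b => F a b) a) T =
  ssum (fun b => ssum (fun k => F (S b + k)%nat b) (T - S b)) T.
Proof.
  destruct T; [reflexivity|].
  rewrite ssum_shift.
  rewrite (tri_swap (fun a b => F (S a) b) T).
  rewrite ssum_S. replace (S T - S T)%nat with O by lia. simpl ssum at 1.
  rewrite Rplus_0_l, Rplus_0_r. apply ssum_ext. intros b Hb.
  replace (S T - S b)%nat with (T - b)%nat by lia. reflexivity.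
Qed.


Lemma incr_le_lim (u : nat -> R) (l : R) :
  (forall n, u n <= u (S n)) -> is_lim_seq u l -> forall n, u n <= l.
Proof.
  intros Hinc Hl n.
  assert (Hm : forall k, u n <= u (k + n)%nat).
  { induction k; simpl; [lra|]. specialize (Hinc (k + n)%nat). lra. }
  apply is_lim_seq_incr_n with (N := n) in Hl.
  assert (H := is_lim_seq_le (fun _ => u n) (fun k => u (k + n)%nat) (u n) l Hm
    (is_lim_seq_const _) Hl). simpl in H. exact H.
Qed.

Lemma lim_le_of_le (u : nat -> R) (l c : R) :
  is_lim_seq u l -> (forall n, u n <= c) -> l <= c.
Proof.
  intros Hl Hc.
  assert (H := is_lim_seq_le u (fun _ => c) l c Hc Hl (is_lim_seq_const _)). exact H.
Qed.

Lemma lim_le_of_le_ev (u : nat -> R) (l c : R) N :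
  is_lim_seq u l -> (forall n, (N <= n)%nat -> u n <= c) -> l <= c.
Proof.
  intros Hl Hc.
  apply is_lim_seq_incr_n with (N := N) in Hl.
  apply (lim_le_of_le _ _ _ Hl). intros n. apply Hc. lia.
Qed.

Lemma lim_ge_of_ge_ev (u : nat -> R) (l c : R) N :
  is_lim_seq u l -> (forall n, (N <= n)%nat -> c <= u n) -> c <= l.
Proof.
  intros Hl Hc.
  apply is_lim_seq_incr_n with (N := N) in Hl.
  assert (H := is_lim_seq_le (fun _ => c) (fun n => u (n + N)%nat) c l
     (fun n => Hc (n + N)%nat ltac:(lia)) (is_lim_seq_const _) Hl). exact H.
Qed.

Lemma incr_bounded_lim (u : nat -> R) (M : R) :
  (forall n, u n <= u (S n)) -> (forall n, u n <= M) -> exists l : R, is_lim_seq u l.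
Proof.
  intros Hi Hb. destruct (ex_finite_lim_seq_incr u M Hi Hb) as [l Hl]. exists l. exact Hl.
Qed.

Lemma ssum_lim (g : nat -> nat -> R) (G : nat -> R) M :
  (forall i, is_lim_seq (fun T => g T i) (G i)) ->
  is_lim_seq (fun T => ssum (g T) M) (ssum G M).
Proof.
  intros H. induction M; simpl.
  - apply is_lim_seq_const.
  - apply is_lim_seq_plus'; auto.
Qed.

Lemma lim_shift_sub (v : nat -> R) (l : R) c :
  is_lim_seq v l -> is_lim_seq (fun T => v (T - c)%nat) l.
Proof.
  intros H. apply is_lim_seq_incr_n with (N := c).
  apply is_lim_seq_ext with v; auto. intros n. f_equal. lia.
Qed.

Lemma lim_double (u : nat -> R) (l : R) :
  is_lim_seq u l -> is_lim_seq (fun T => u (2 * T)%nat) l.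
Proof.
  intros H. apply (is_lim_seq_subseq u l (fun T => (2 * T)%nat)); auto.
  apply eventually_subseq. intros; lia.
Qed.

Lemma lim_from_double (u : nat -> R) (l : R) :
  (forall n, u n <= u (S n)) -> is_lim_seq (fun T => u (2 * T)%nat) l -> is_lim_seq u l.
Proof.
  intros Hi Hl.
  assert (Hm : forall n k, (n <= k)%nat -> u n <= u k).
  { intros n k Hnk. induction Hnk; [lra|]. specialize (Hi m). lra. }
  assert (Hb : forall n, u n <= l).
  { intros n. assert (u n <= u (2 * n)%nat) by (apply Hm; lia).
    assert (u (2 * n)%nat <= l).
    { apply (incr_le_lim (fun T => u (2 * T)%nat)); auto. intros; apply Hm; lia. }
    lra. }
  destruct (incr_bounded_lim u l Hi Hb) as [l' Hl'].
  assert (l' = l).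
  { assert (H2 := lim_double _ _ Hl').
    assert (E := is_lim_seq_unique _ _ H2). rewrite (is_lim_seq_unique _ _ Hl) in E.
    congruence. }
  subst. auto.
Qed.

Lemma L1 (g : nat -> nat -> R) (G : nat -> R) (L : R) :
  (forall T i, 0 <= g T i) ->
  (forall T i, g T i <= g (S T) i) ->
  (forall i, is_lim_seq (fun T => g T i) (G i)) ->
  is_lim_seq (fun T => ssum G T) L ->
  is_lim_seq (fun T => ssum (g T) T) L.
Proof.
  intros H0 Hi HG HL.
  assert (HgG : forall T i, g T i <= G i).
  { intros T i. apply (incr_le_lim (fun T => g T i)); auto. }
  assert (HG0 : forall i, 0 <= G i).
  { intros i. apply (lim_ge_of_ge_ev (fun T => g T i) (G i) 0 0); auto. }
  assert (HsI : forall n, ssum G n <= ssum G (S n)).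
  { intros n. simpl. specialize (HG0 n). lra. }
  assert (HsL : forall n, ssum G n <= L) by (apply incr_le_lim; auto).
  set (s := fun T => ssum (g T) T).
  assert (Hsi : forall T, s T <= s (S T)).
  { intros T. unfold s. simpl.
    assert (ssum (g T) T <= ssum (g (S T)) T) by (apply ssum_le; intros; apply Hi).
    specialize (H0 (S T) T). lra. }
  assert (Hsb : forall T, s T <= L).
  { intros T. unfold s. assert (ssum (g T) T <= ssum G T) by (apply ssum_le; intros; apply HgG).
    specialize (HsL T). lra. }
  destruct (incr_bounded_lim s L Hsi Hsb) as [l' Hl'].
  assert (Hle : l' <= L) by (apply (lim_le_of_le s); auto).
  assert (Hge : L <= l').
  { apply (lim_le_of_le (fun T => ssum G T)); auto.
    intros M.
    apply (lim_le_of_le_ev (fun T => ssum (g T) M) (ssum G M) l' M).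
    - apply ssum_lim; auto.
    - intros n Hn.
      assert (ssum (g n) M <= ssum (g n) n) by (apply ssum_mono; auto).
      assert (s n <= l') by (apply incr_le_lim; auto). unfold s in *. lra. }
  replace L with l' by lra. exact Hl'.
Qed.


Definition Hs (n : nat) : R := ssum (fun t => / (2 * INR t + 1)) n.

Lemma INR_pos_lin t : 0 < 2 * INR t + 1.
Proof. pose proof (pos_INR t). lra. Qed.

Lemma Hs_S n : Hs (S n) = Hs n + / (2 * INR n + 1).
Proof. reflexivity. Qed.

Lemma Hs_nonneg n : 0 <= Hs n.
Proof. unfold Hs. apply ssum_nonneg. intros. left. apply Rinv_0_lt_compat, INR_pos_lin. Qed.

Lemma Hs_mono n m : (n <= m)%nat -> Hs n <= Hs m.
Proof. intros. unfold Hs. apply ssum_mono; auto. intros. left. apply Rinv_0_lt_compat, INR_pos_lin. Qed.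

Lemma Hs_ge1 n : 1 <= Hs (S n).
Proof.
  assert (Hs 1 <= Hs (S n)) by (apply Hs_mono; lia).
  unfold Hs in H at 1. simpl in H. replace (2 * 0 + 1) with 1 in H by lra.
  rewrite Rinv_1 in H. lra.
Qed.

Lemma lim_inv_lin : is_lim_seq (fun T => / (2 * INR T + 1)) 0.
Proof.
  assert (H : is_lim_seq (fun T => 2 * INR T + 1) p_infty).
  { apply is_lim_seq_plus with (l1 := p_infty) (l2 := 1).
    - pose proof is_lim_seq_INR as HI.
      apply is_lim_seq_scal_l with (a := 2) (lu := p_infty) in HI.
      replace (Rbar_mult 2 p_infty) with p_infty in HI. auto.
      simpl. destruct (Rle_dec 0 2); [|lra]. destruct (Rle_lt_or_eq_dec 0 2 r); auto. lra.
    - apply is_lim_seq_const.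
    - constructor. }
  apply is_lim_seq_inv in H; [|discriminate]. simpl in H. exact H.
Qed.

Lemma ssum_const c n : ssum (fun _ => c) n = INR n * c.
Proof. induction n; [simpl; ring|]. rewrite ssum_S, IHn, S_INR. ring. Qed.

Lemma Hs_tail T r : 0 <= Hs (T + r) - Hs T <= INR r / (2 * INR T + 1).
Proof.
  unfold Hs. rewrite ssum_add.
  split.
  - assert (0 <= ssum (fun k => / (2 * INR (T + k) + 1)) r).
    { apply ssum_nonneg. intros. left. apply Rinv_0_lt_compat, INR_pos_lin. }
    lra.
  - assert (ssum (fun k => / (2 * INR (T + k) + 1)) r <= ssum (fun k => / (2 * INR T + 1)) r).
    { apply ssum_le. intros k _. apply Rinv_le_contravar. apply INR_pos_lin.
      rewrite plus_INR. pose proof (pos_INR k). lra. }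
    assert (E : ssum (fun _ => / (2 * INR T + 1)) r = INR r / (2 * INR T + 1)).
    { rewrite ssum_const. unfold Rdiv. ring. }
    lra.
Qed.

Lemma lim_Hs_tail r : is_lim_seq (fun T => Hs (T + r) - Hs T) 0.
Proof.
  apply is_lim_seq_le_le with (u := fun _ => 0) (w := fun T => INR r * / (2 * INR T + 1)).
  - intros. apply Hs_tail.
  - apply is_lim_seq_const.
  - replace (Finite 0) with (Rbar_mult (INR r) 0) by (simpl; f_equal; ring).
    apply is_lim_seq_scal_l. apply lim_inv_lin.
Qed.

Lemma lim_Hs_div : is_lim_seq (fun T => Hs T / (2 * INR T + 1)) 0.
Proof.
  assert (C : is_lim_seq (fun n => sum_f_R0 (fun t => / (2 * INR t + 1)) (Init.Nat.pred n) / INR n) 0).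
  { apply is_lim_seq_Reals. apply Cesaro_1. apply is_lim_seq_Reals. apply lim_inv_lin. }
  assert (E : forall n, sum_f_R0 (fun t => / (2 * INR t + 1)) (Init.Nat.pred n) / INR n = Hs n / INR n).
  { intros [|n]. simpl. unfold Rdiv. rewrite Rinv_0. ring.
    f_equal. simpl. unfold Hs. induction n. simpl. lra. simpl. rewrite IHn. simpl. lra. }
  apply is_lim_seq_le_le with (u := fun _ => 0) (w := fun n => Hs n / INR n).
  - intros [|n].
    + unfold Hs. simpl. unfold Rdiv. rewrite Rinv_0. lra.
    + pose proof (Hs_nonneg (S n)). rewrite S_INR. pose proof (pos_INR n). split.
      * apply Rdiv_le_0_compat; lra.
      * unfold Rdiv. apply Rmult_le_compat_l; auto. apply Rinv_le_contravar; lra.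
  - apply is_lim_seq_const.
  - apply is_lim_seq_ext with (2 := C). auto.
Qed.

Lemma tele_finite T r :
  ssum (fun t => / ((2 * INR t + 1) * (2 * INR t + 1 + 2 * INR (S r)))) T =
  (Hs (S r) - (Hs (T + S r) - Hs T)) / (2 * INR (S r)).
Proof.
  assert (Hr : 0 < INR (S r)) by (apply lt_0_INR; lia).
  transitivity (ssum (fun t => / (2 * INR (S r)) * (/ (2 * INR t + 1) - / (2 * INR (S r + t) + 1))) T).
  { apply ssum_ext. intros t _. rewrite plus_INR. pose proof (pos_INR t).
    field. split; lra. }
  rewrite ssum_scal, ssum_minus.
  replace (ssum (fun k => / (2 * INR (S r + k) + 1)) T) with (Hs (S r + T) - Hs (S r)).
  2:{ unfold Hs. rewrite ssum_add. ring. }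
  replace (S r + T)%nat with (T + S r)%nat by lia. fold (Hs T). field. lra.
Qed.

Lemma tele_lim r :
  is_lim_seq (fun T => ssum (fun t => / ((2 * INR t + 1) * (2 * INR t + 1 + 2 * INR (S r)))) T)
    (Hs (S r) / (2 * INR (S r))).
Proof.
  apply is_lim_seq_ext with (fun T => (Hs (S r) - (Hs (T + S r) - Hs T)) / (2 * INR (S r))).
  { intros. rewrite tele_finite. auto. }
  replace (Hs (S r) / (2 * INR (S r))) with ((Hs (S r) - 0) / (2 * INR (S r))) by (f_equal; ring).
  unfold Rdiv. apply is_lim_seq_scal_r with (a := / (2 * INR (S r))) (lu := Hs (S r) - 0).
  apply is_lim_seq_minus'. apply is_lim_seq_const. apply lim_Hs_tail.
Qed.

Lemma by_parts (a : nat -> R) J :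
  ssum (fun j => Hs (S j) * (a j - a (S j))) J =
  ssum (fun j => a j / (2 * INR j + 1)) J - Hs J * a J.
Proof.
  induction J.
  - simpl. unfold Hs; simpl. ring.
  - rewrite !ssum_S, IHJ. rewrite Hs_S. field. apply Rgt_not_eq, INR_pos_lin.
Qed.

Lemma pot_step t :
  let h := Hs (S t) in
  h ^ 2 / (2 * INR t + 1) ^ 2 <=
  2 * (h ^ 2 + h + 1) / (2 * INR t + 1) - 2 * (Hs (S (S t)) ^ 2 + Hs (S (S t)) + 1) / (2 * INR (S t) + 1).
Proof.
  intros h. rewrite (Hs_S (S t)). fold h. rewrite S_INR.
  assert (Hh : 1 <= h) by apply Hs_ge1.
  set (a := 2 * INR t + 1). assert (Ha : 1 <= a) by (unfold a; pose proof (pos_INR t); lra).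
  replace (2 * INR (S t) + 1) with (a + 2) by (unfold a; rewrite S_INR; ring).
  replace (2 * (INR t + 1) + 1) with (a + 2) by (unfold a; ring).
  set (y := / (a + 2)). assert (Hy : y * (a + 2) = 1) by (unfold y; field; lra).
  assert (Hy0 : 0 < y) by (unfold y; apply Rinv_0_lt_compat; lra).
  assert (Hy1 : y <= 1) by (unfold y; rewrite <- Rinv_1; apply Rinv_le_contravar; lra).
  assert (Key : 0 <= 4 * a * (h^2 + h + 1) - 2 * a^2 * y * (2*h + y + 1) - (a+2) * h^2).
  { assert (a ^ 2 * y <= a).
    { replace (a ^ 2 * y) with (a * (a * y)) by ring.
      assert (a * y <= 1). { replace (a * y) with (1 - 2 * y) by (rewrite <- Hy; ring). lra. }
      nra. }
    assert (0 <= 2 * h + y + 1) by lra.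
    assert (a ^ 2 * y * (2 * h + y + 1) <= a * (2 * h + 2)).
    { apply Rle_trans with (a * (2 * h + y + 1)). apply Rmult_le_compat_r; lra.
      apply Rmult_le_compat_l; lra. }
    nra. }
  replace (2 * ((h + y) ^ 2 + (h + y) + 1) / (a + 2)) with (2 * ((h + y) ^ 2 + (h + y) + 1) * y)
    by (unfold y; field; lra).
  apply Rminus_le.
  replace (h ^ 2 / a ^ 2 - (2 * (h ^ 2 + h + 1) / a - 2 * ((h + y) ^ 2 + (h + y) + 1) * y))
    with (- (4 * a * (h^2 + h + 1) - 2 * a^2 * y * (2*h + y + 1) - (a+2) * h^2) * y / a ^ 2).
  2:{ unfold y. field. lra. }
  assert (0 <= (4 * a * (h^2 + h + 1) - 2 * a^2 * y * (2*h + y + 1) - (a+2) * h^2) * y / a ^ 2).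
  { apply Rdiv_le_0_compat. apply Rmult_le_pos; lra. nra. }
  lra.
Qed.

Lemma pot_bound T : ssum (fun t => Hs (S t) ^ 2 / (2 * INR t + 1) ^ 2) T <= 6.
Proof.
  set (Q := fun t => 2 * (Hs (S t) ^ 2 + Hs (S t) + 1) / (2 * INR t + 1)).
  assert (HQ : forall T, ssum (fun t => Hs (S t) ^ 2 / (2 * INR t + 1) ^ 2) T <= Q O - Q T).
  { induction T0. simpl. lra. rewrite ssum_S. pose proof (pot_step T0) as H. cbv zeta in H.
    unfold Q in *. lra. }
  assert (0 <= Q T).
  { unfold Q. apply Rdiv_le_0_compat. pose proof (Hs_nonneg (S T)). nra. apply INR_pos_lin. }
  assert (Q O = 6).
  { unfold Q. unfold Hs. simpl. field. }
  specialize (HQ T). lra.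
Qed.


Definition So_seq (T : nat) : R := ssum (fun t => / (2 * INR t + 1) ^ 2) T.

Lemma So_term_le t : / (2 * INR t + 1) ^ 2 <= Hs (S t) ^ 2 / (2 * INR t + 1) ^ 2.
Proof.
  pose proof (Hs_ge1 t). pose proof (INR_pos_lin t).
  unfold Rdiv. rewrite <- (Rmult_1_l (/ (2 * INR t + 1) ^ 2)) at 1. apply Rmult_le_compat_r.
  left. apply Rinv_0_lt_compat. apply pow_lt; lra.
  replace (Hs (S t) ^ 2) with (Hs (S t) * Hs (S t)) by ring. nra.
Qed.

Lemma So_exists : exists So : R, is_lim_seq So_seq So.
Proof.
  apply (incr_bounded_lim _ 6).
  - intros n. unfold So_seq. rewrite ssum_S. pose proof (INR_pos_lin n).
    assert (0 < / (2 * INR n + 1) ^ 2) by (apply Rinv_0_lt_compat; apply pow_lt; lra). lra.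
  - intros n. eapply Rle_trans; [|apply (pot_bound n)]. apply ssum_le. intros. apply So_term_le.
Qed.

Definition So : R := real (Lim_seq So_seq).

Lemma So_lim : is_lim_seq So_seq So.
Proof. unfold So. destruct So_exists as [l Hl]. rewrite (is_lim_seq_unique _ _ Hl). exact Hl. Qed.

Definition Aodd (s : nat) : R := ssum (fun t => Hs (S t) / (2 * INR t + 2)) s.

Definition Dn (s J : nat) : R :=
  ssum (fun j => Hs (S j) * (/ (2 * INR j + 2) - / (2 * INR j + 2 + (2 * INR s + 1)))) J.

Definition U_seq (J : nat) : R :=
  ssum (fun j => Hs (S j) * (/ (2 * INR j + 1) - / (2 * INR j + 2))) J.

Lemma lim_HsJ_a (c : nat -> R) :
  (forall J, 0 <= c J <= / (2 * INR J + 1)) -> is_lim_seq (fun J => Hs J * c J) 0.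
Proof.
  intros Hc.
  apply is_lim_seq_le_le with (u := fun _ => 0) (w := fun J => Hs J / (2 * INR J + 1)).
  - intros J. pose proof (Hs_nonneg J). specialize (Hc J). split. nra.
    unfold Rdiv. apply Rmult_le_compat_l; lra.
  - apply is_lim_seq_const.
  - apply lim_Hs_div.
Qed.

Lemma UV_sum J : U_seq J + Dn 0 J = So_seq J - Hs J / (2 * INR J + 1).
Proof.
  unfold U_seq, Dn. rewrite <- ssum_plus.
  transitivity (ssum (fun j => Hs (S j) * ((fun j => / (2 * INR j + 1)) j - (fun j => / (2 * INR j + 1)) (S j))) J).
  { apply ssum_ext. intros j _. rewrite S_INR. simpl. ring_simplify.
    replace (2 * INR j + 2 + (2 * 0 + 1)) with (2 * (INR j + 1) + 1) by ring. ring. }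
  rewrite by_parts. unfold So_seq. unfold Rdiv at 2. f_equal.
  apply ssum_ext. intros j _. pose proof (INR_pos_lin j). field. lra.
Qed.

Lemma Hs_sym j : Hs (S j) / (2 * INR j + 2) =
  / 2 * ssum (fun i => / ((2 * INR i + 1) * (2 * INR (j - i) + 1))) (S j).
Proof.
  assert (E : ssum (fun i => / ((2 * INR i + 1) * (2 * INR (j - i) + 1))) (S j) =
              ssum (fun i => / (2 * INR j + 2) * (/ (2 * INR i + 1) + / (2 * INR (j - i) + 1))) (S j)).
  { apply ssum_ext. intros i Hi. rewrite minus_INR by lia.
    pose proof (INR_pos_lin i). assert (INR i <= INR j) by (apply le_INR; lia).
    field. repeat split; lra. }
  rewrite E, ssum_scal, ssum_plus.
  replace (ssum (fun i => / (2 * INR (j - i) + 1)) (S j)) with (Hs (S j)).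
  2:{ unfold Hs. rewrite <- ssum_rev. apply ssum_ext. intros i Hi. replace (S j - S i)%nat with (j - i)%nat by lia. reflexivity. }
  fold (Hs (S j)). pose proof (INR_pos_lin j). field. lra.
Qed.

Lemma V_swap J : Dn 0 J =
  / 2 * ssum (fun i => / (2 * INR i + 1) *
     ssum (fun k => / ((2 * INR k + 1) * (2 * INR k + 1 + 2 * INR (S i)))) (J - i)) J.
Proof.
  unfold Dn.
  transitivity (ssum (fun a => ssum (fun b => / 2 * (/ (2 * INR a + 3) *
      / ((2 * INR b + 1) * (2 * INR (a - b) + 1)))) (S a)) J).
  { apply ssum_ext. intros j _.
    rewrite ssum_scal, <- ssum_scal.
    replace (Hs (S j) * (/ (2 * INR j + 2) - / (2 * INR j + 2 + (2 * INR 0 + 1))))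
      with (/ (2 * INR j + 3) * (Hs (S j) / (2 * INR j + 2))).
    2:{ simpl. pose proof (INR_pos_lin j). field. lra. }
    rewrite Hs_sym. rewrite ssum_scal, ssum_scal. ring. }
  rewrite tri_swap. rewrite <- ssum_scal. apply ssum_ext. intros b Hb.
  rewrite <- !ssum_scal. apply ssum_ext. intros k Hk.
  replace (b + k - b)%nat with k by lia. rewrite plus_INR, S_INR.
  pose proof (INR_pos_lin b). pose proof (INR_pos_lin k). field. lra.
Qed.

Lemma U_term_nonneg j : 0 <= Hs (S j) * (/ (2 * INR j + 1) - / (2 * INR j + 2)).
Proof.
  pose proof (Hs_nonneg (S j)). pose proof (INR_pos_lin j).
  apply Rmult_le_pos; auto.
  assert (/ (2 * INR j + 2) <= / (2 * INR j + 1)) by (apply Rinv_le_contravar; lra). lra.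
Qed.

Lemma Dn_term_nonneg s j : 0 <= Hs (S j) * (/ (2 * INR j + 2) - / (2 * INR j + 2 + (2 * INR s + 1))).
Proof.
  pose proof (Hs_nonneg (S j)). pose proof (INR_pos_lin j). pose proof (INR_pos_lin s).
  apply Rmult_le_pos; auto.
  assert (/ (2 * INR j + 2 + (2 * INR s + 1)) <= / (2 * INR j + 2)) by (apply Rinv_le_contravar; lra). lra.
Qed.

Lemma So_seq_le J : So_seq J <= 6.
Proof. eapply Rle_trans; [|apply (pot_bound J)]. apply ssum_le. intros. apply So_term_le. Qed.

Lemma U_exists : exists U : R, is_lim_seq U_seq U.
Proof.
  apply (incr_bounded_lim _ 6).
  - intros n. unfold U_seq. rewrite ssum_S. pose proof (U_term_nonneg n). lra.
  - intros n. pose proof (UV_sum n). pose proof (So_seq_le n).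
    assert (0 <= Dn 0 n) by (apply ssum_nonneg; intros; apply Dn_term_nonneg).
    assert (0 <= Hs n / (2 * INR n + 1)) by (apply Rdiv_le_0_compat; [apply Hs_nonneg|apply INR_pos_lin]).
    lra.
Qed.

Lemma V_lim : is_lim_seq (Dn 0) (So / 3).
Proof.
  destruct U_exists as [U HU].
  assert (H1 : is_lim_seq (Dn 0) (So - 0 - U)).
  { apply is_lim_seq_ext with (fun J => So_seq J - Hs J / (2 * INR J + 1) - U_seq J).
    { intros J. pose proof (UV_sum J). lra. }
    apply is_lim_seq_minus'; auto. apply is_lim_seq_minus'. apply So_lim. apply lim_Hs_div. }
  assert (H2 : is_lim_seq (Dn 0) (/ 2 * U)).
  { apply is_lim_seq_ext with (fun J => / 2 * ssum (fun i => / (2 * INR i + 1) *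
       ssum (fun k => / ((2 * INR k + 1) * (2 * INR k + 1 + 2 * INR (S i)))) (J - i)) J).
    { intros J. rewrite V_swap. auto. }
    apply (is_lim_seq_scal_l _ (/ 2) U).
    apply L1 with (G := fun i => / (2 * INR i + 1) * (Hs (S i) / (2 * INR (S i)))).
    - intros T i. apply Rmult_le_pos. left; apply Rinv_0_lt_compat, INR_pos_lin.
      apply ssum_nonneg. intros k _. left. apply Rinv_0_lt_compat.
      pose proof (INR_pos_lin k). pose proof (pos_INR (S i)). apply Rmult_lt_0_compat; lra.
    - intros T i. apply Rmult_le_compat_l. left; apply Rinv_0_lt_compat, INR_pos_lin.
      apply ssum_mono; [|lia]. intros k. left. apply Rinv_0_lt_compat.
      pose proof (INR_pos_lin k). pose proof (pos_INR (S i)). apply Rmult_lt_0_compat; lra.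
    - intros i. apply is_lim_seq_scal_l with (lu := Hs (S i) / (2 * INR (S i))).
      apply lim_shift_sub. apply tele_lim.
    - apply is_lim_seq_ext with U_seq; auto. intros T. unfold U_seq. apply ssum_ext.
      intros i _. rewrite S_INR. pose proof (INR_pos_lin i). field. lra. }
  assert (E : So - 0 - U = / 2 * U).
  { assert (E := is_lim_seq_unique _ _ H1). rewrite (is_lim_seq_unique _ _ H2) in E.
    injection E; intros; lra. }
  replace (So / 3) with (/ 2 * U) by lra. exact H2.
Qed.

Lemma Dn_rec s : is_lim_seq (fun J => Dn (S s) J - Dn s J) (Hs (S s) / (2 * INR (S s))).
Proof.
  set (a := fun j => / (2 * INR j + 2 + (2 * INR s + 1))).
  apply is_lim_seq_ext with (fun J => ssum (fun j => / ((2 * INR j + 1) * (2 * INR j + 1 + 2 * INR (S s)))) J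
                                       - Hs J * a J).
  { intros J. unfold Dn. rewrite <- ssum_minus.
    transitivity (ssum (fun j => Hs (S j) * (a j - a (S j))) J).
    2:{ apply ssum_ext. intros j _. unfold a. rewrite !S_INR.
        pose proof (INR_pos_lin j). pose proof (pos_INR s). field. lra. }
    rewrite by_parts. f_equal. apply ssum_ext. intros j _. unfold a. rewrite S_INR.
    pose proof (INR_pos_lin j). pose proof (pos_INR s). field. lra. }
  replace (Hs (S s) / (2 * INR (S s))) with (Hs (S s) / (2 * INR (S s)) - 0) by ring.
  apply is_lim_seq_minus'. apply tele_lim.
  apply lim_HsJ_a. intros J. unfold a. pose proof (INR_pos_lin J). pose proof (pos_INR s). split.
  left; apply Rinv_0_lt_compat; lra. apply Rinv_le_contravar; lra.
Qed.

Lemma Dn_lim s : is_lim_seq (Dn s) (Aodd s + So / 3).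
Proof.
  induction s.
  - replace (Aodd 0 + So / 3) with (So / 3) by (unfold Aodd; simpl; ring). apply V_lim.
  - apply is_lim_seq_ext with (fun J => Dn s J + (Dn (S s) J - Dn s J)). intros; ring.
    replace (Aodd (S s) + So / 3) with ((Aodd s + So / 3) + Hs (S s) / (2 * INR (S s))).
    2:{ unfold Aodd. rewrite ssum_S. rewrite S_INR. unfold Rdiv. ring_simplify.
        replace (2 * (INR s + 1)) with (2 * INR s + 2) by ring. ring. }
    apply is_lim_seq_plus'; auto. apply Dn_rec.
Qed.


Lemma sfr_ssum f n : sum_f_R0 f n = ssum f (S n).
Proof. induction n; simpl; [ring|]. rewrite IHn. simpl. ring. Qed.

Lemma ssum_zero_ext f n : (forall k, (k < n)%nat -> f k = 0) -> ssum f n = 0.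
Proof. intros H. rewrite (ssum_ext f (fun _ => 0)); auto. apply ssum_zero. Qed.

Lemma ssum_single f n k : (k < n)%nat -> (forall j, (j < n)%nat -> j <> k -> f j = 0) -> ssum f n = f k.
Proof.
  intros Hk H. replace n with (k + (1 + (n - S k)))%nat by lia.
  rewrite ssum_add, ssum_add.
  rewrite ssum_zero_ext by (intros; apply H; lia).
  rewrite (ssum_zero_ext (fun k0 => f (k + (1 + k0))%nat)) by (intros; apply H; lia).
  simpl. rewrite Nat.add_0_r. ring.
Qed.

Lemma ssum_range (f : nat -> R) lo hi n :
  (lo <= hi)%nat -> (hi < n)%nat ->
  ssum (fun i => if (Nat.leb lo i && Nat.leb i hi)%bool then f i else 0) n =
  ssum (fun j => f (lo + j)%nat) (S (hi - lo)).
Proof.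
  intros H1 H2. replace n with (lo + (S (hi - lo) + (n - S hi)))%nat by lia.
  rewrite ssum_add, ssum_add.
  rewrite (ssum_zero_ext _ lo).
  2:{ intros k Hk. cbv beta. replace (Nat.leb lo k) with false by (symmetry; apply Nat.leb_gt; lia).
      reflexivity. }
  rewrite (ssum_zero_ext _ (n - S hi)).
  2:{ intros k Hk. cbv beta. replace (Nat.leb (lo + (S (hi - lo) + k)) hi) with false
        by (symmetry; apply Nat.leb_gt; lia). rewrite Bool.andb_false_r. reflexivity. }
  rewrite Rplus_0_l, Rplus_0_r. apply ssum_ext. intros k Hk.
  replace (Nat.leb lo (lo + k) && Nat.leb (lo + k) hi)%bool with true; auto.
  symmetry. apply Bool.andb_true_iff. split; apply Nat.leb_le; lia.
Qed.

Definition h2 (Y Z : R) (j : nat) : R := ssum (fun b => Y ^ b * Z ^ (j - b)) (S j).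
Definition h3 (X Y Z : R) (k : nat) : R := ssum (fun a => X ^ a * h2 Y Z (k - a)) (S k).

Lemma h2_S (Y Z : R) j : h2 Y Z (S j) = Z ^ S j + Y * h2 Y Z j.
Proof.
  unfold h2. rewrite ssum_shift. simpl (Y ^ 0). rewrite Nat.sub_0_r. f_equal. ring.
  rewrite <- ssum_scal. apply ssum_ext. intros b _. simpl. ring.
Qed.

Lemma h3_S (X Y Z : R) k : h3 X Y Z (S k) = h2 Y Z (S k) + X * h3 X Y Z k.
Proof.
  unfold h3 at 1. rewrite ssum_shift. rewrite Nat.sub_0_r. f_equal. ring.
  unfold h3. rewrite <- ssum_scal. apply ssum_ext. intros a _. simpl. ring.
Qed.

Lemma h2_closed (Y Z : R) j : h2 Y Z j * (Y - Z) = Y ^ S j - Z ^ S j.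
Proof.
  induction j.
  - unfold h2. simpl. ring.
  - rewrite h2_S. replace ((Z ^ S j + Y * h2 Y Z j) * (Y - Z)) with (Z ^ S j * (Y - Z) + Y * (h2 Y Z j * (Y - Z))) by ring.
    rewrite IHj. simpl. ring.
Qed.

Lemma h3_closed (X Y Z : R) k : h3 X Y Z k * ((X - Y) * (X - Z) * (Y - Z)) =
  X ^ (k + 2) * (Y - Z) - Y ^ (k + 2) * (X - Z) + Z ^ (k + 2) * (X - Y).
Proof.
  induction k.
  - unfold h3, h2. simpl. ring.
  - rewrite h3_S.
    replace ((h2 Y Z (S k) + X * h3 X Y Z k) * ((X - Y) * (X - Z) * (Y - Z)))
      with ((h2 Y Z (S k) * (Y - Z)) * ((X - Y) * (X - Z)) + X * (h3 X Y Z k * ((X - Y) * (X - Z) * (Y - Z)))) by ring.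
    rewrite IHk, h2_closed. replace (S k + 2)%nat with (S (k + 2)) by lia.
    replace (S (S k)) with (k + 2)%nat by lia. simpl. ring.
Qed.


Lemma triple_alg (w : nat) (x1 x2 x3 : R) : (4 <= w)%nat -> 0 < x3 -> x3 < x2 -> x2 < x1 ->
  sum_f_R0 (fun a => sum_f_R0 (fun b => sum_f_R0 (fun c =>
   if (Nat.eqb (a+b+c) w && Nat.leb 2 a && Nat.leb 1 b && Nat.leb 1 c)%bool
   then 2 / x1 ^ a * (2 / x2 ^ b * (2 / x3 ^ c * 1)) else 0) w) w) w
  = 8 * (/ (x3 ^ (w-3) * (x2 - x3) * (x1 - x3) * x1) - / (x2 ^ (w-3) * (x1 - x2) * (x2 - x3) * x1)
         + / (x1 ^ (w-2) * (x1 - x2) * (x1 - x3))).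
Proof.
  intros Hw H3 H23 H12.
  set (X := / x1). set (Y := / x2). set (Z := / x3).
  assert (Step1 : forall a b, (a <= w)%nat -> (b <= w)%nat ->
    sum_f_R0 (fun c => if (Nat.eqb (a+b+c) w && Nat.leb 2 a && Nat.leb 1 b && Nat.leb 1 c)%bool
       then 2 / x1 ^ a * (2 / x2 ^ b * (2 / x3 ^ c * 1)) else 0) w =
    if (Nat.leb 2 a && Nat.leb 1 b && Nat.leb (a + b + 1) w)%bool
    then 8 * (X ^ a * Y ^ b * Z ^ (w - a - b)) else 0).
  { intros a b Ha Hb. rewrite sfr_ssum.
    destruct (Nat.leb 2 a && Nat.leb 1 b && Nat.leb (a + b + 1) w)%bool eqn:E.
    - apply Bool.andb_true_iff in E as [E E3]. apply Bool.andb_true_iff in E as [E1 E2].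
      apply Nat.leb_le in E1, E2, E3.
      rewrite (ssum_single _ _ (w - a - b)); [| lia |].
      + replace (Nat.eqb (a + b + (w - a - b)) w) with true by (symmetry; apply Nat.eqb_eq; lia).
        replace (Nat.leb 2 a) with true by (symmetry; apply Nat.leb_le; lia).
        replace (Nat.leb 1 b) with true by (symmetry; apply Nat.leb_le; lia).
        replace (Nat.leb 1 (w - a - b)) with true by (symmetry; apply Nat.leb_le; lia).
        simpl. unfold X, Y, Z. rewrite !pow_inv. unfold Rdiv. ring.
      + intros j Hj Hne. replace (Nat.eqb (a + b + j) w) with false by (symmetry; apply Nat.eqb_neq; lia).
        reflexivity.
    - apply ssum_zero_ext. intros c Hc.
      destruct (Nat.eqb (a + b + c) w) eqn:F1; [|reflexivity].
      destruct (Nat.leb 2 a) eqn:F2; [|reflexivity].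
      destruct (Nat.leb 1 b) eqn:F3; [|reflexivity].
      destruct (Nat.leb 1 c) eqn:F4; [|reflexivity].
      exfalso. apply Nat.eqb_eq in F1. apply Nat.leb_le in F4. apply Nat.leb_le in F3.
      replace (Nat.leb (a + b + 1) w) with true in E by (symmetry; apply Nat.leb_le; lia).
      simpl in E. congruence. }
  assert (Step2 : forall a, (a <= w)%nat ->
    sum_f_R0 (fun b => if (Nat.leb 2 a && Nat.leb 1 b && Nat.leb (a + b + 1) w)%bool
                       then 8 * (X ^ a * Y ^ b * Z ^ (w - a - b)) else 0) w =
    if (Nat.leb 2 a && Nat.leb a (w - 2))%bool then 8 * (X ^ a * (Y * Z * h2 Y Z (w - a - 2))) else 0).
  { intros a Ha. rewrite sfr_ssum.
    destruct (Nat.leb 2 a && Nat.leb a (w - 2))%bool eqn:E.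
    - apply Bool.andb_true_iff in E as [E1 E2]. apply Nat.leb_le in E1, E2.
      rewrite (ssum_ext _ (fun b => if (Nat.leb 1 b && Nat.leb b (w - a - 1))%bool
                            then 8 * (X ^ a * Y ^ b * Z ^ (w - a - b)) else 0)).
      2:{ intros b Hb. replace (Nat.leb 2 a) with true by (symmetry; apply Nat.leb_le; lia).
          rewrite Bool.andb_true_l.
          destruct (Nat.leb (a + b + 1) w) eqn:G1; destruct (Nat.leb b (w - a - 1)) eqn:G2; auto.
          - apply Nat.leb_le in G1; apply Nat.leb_gt in G2; lia.
          - apply Nat.leb_gt in G1; apply Nat.leb_le in G2. destruct b; simpl; auto. lia. }
      rewrite ssum_range by lia.
      unfold h2. rewrite <- ssum_scal, <- ssum_scal, <- ssum_scal.
      replace (S (w - a - 1 - 1)) with (S (w - a - 2)) by lia.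
      apply ssum_ext. intros j Hj.
      replace (w - a - (1 + j))%nat with (S (w - a - 2 - j)) by lia. simpl. ring.
    - apply ssum_zero_ext. intros b Hb.
      destruct (Nat.leb 2 a) eqn:F2; [|reflexivity]. destruct (Nat.leb 1 b) eqn:F3; [|reflexivity].
      destruct (Nat.leb (a + b + 1) w) eqn:F4; [|reflexivity].
      exfalso. apply Nat.leb_le in F2, F3, F4.
      replace (Nat.leb a (w - 2)) with true in E by (symmetry; apply Nat.leb_le; lia).
      simpl in E. congruence. }
  rewrite (sfr_ssum _ w).
  rewrite (ssum_ext _ (fun a => if (Nat.leb 2 a && Nat.leb a (w - 2))%bool
      then 8 * (X ^ a * (Y * Z * h2 Y Z (w - a - 2))) else 0)).
  2:{ intros a Ha. rewrite <- Step2 by lia. rewrite !sfr_ssum. apply ssum_ext. intros b Hb.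
      rewrite <- Step1 by lia. rewrite sfr_ssum. reflexivity. }
  rewrite ssum_range by lia.
  transitivity (8 * (X ^ 2 * Y * Z) * h3 X Y Z (w - 4)).
  { unfold h3. rewrite <- ssum_scal. replace (S (w - 2 - 2)) with (S (w - 4)) by lia.
    apply ssum_ext. intros j Hj. replace (w - (2 + j) - 2)%nat with (w - 4 - j)%nat by lia.
    rewrite pow_add. ring. }
  assert (Hx1 : x1 <> 0) by lra. assert (Hx2 : x2 <> 0) by lra. assert (Hx3 : x3 <> 0) by lra.
  assert (HXY : X - Y <> 0).
  { unfold X, Y. intro. assert (/ x1 = / x2) by lra. apply Rinv_eq_reg in H0. lra. }
  assert (HXZ : X - Z <> 0).
  { unfold X, Z. intro. assert (/ x1 = / x3) by lra. apply Rinv_eq_reg in H0. lra. }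
  assert (HYZ : Y - Z <> 0).
  { unfold Y, Z. intro. assert (/ x2 = / x3) by lra. apply Rinv_eq_reg in H0. lra. }
  assert (Hh := h3_closed X Y Z (w - 4)).
  replace (h3 X Y Z (w - 4)) with ((X ^ (w - 4 + 2) * (Y - Z) - Y ^ (w - 4 + 2) * (X - Z) + Z ^ (w - 4 + 2) * (X - Y))
     / ((X - Y) * (X - Z) * (Y - Z))).
  2:{ rewrite <- Hh. field. repeat split; auto. }
  replace (w - 4 + 2)%nat with (w - 2)%nat by lia.
  replace (w - 2)%nat with (S (w - 3)) by lia.
  unfold X, Y, Z. rewrite !pow_inv.
  set (p1 := x1 ^ (w - 3)). set (p2 := x2 ^ (w - 3)). set (p3 := x3 ^ (w - 3)).
  assert (p1 <> 0) by (apply pow_nonzero; auto).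
  assert (p2 <> 0) by (apply pow_nonzero; auto).
  assert (p3 <> 0) by (apply pow_nonzero; auto).
  simpl. fold p1 p2 p3.
  field. repeat split; try lra; auto.
Qed.


Lemma nsum_cons f fs N : nsum (f :: fs) N = ssum (fun k => f (S k) * nsum fs k) N.
Proof. induction N; simpl; auto. simpl in IHN. rewrite IHN. auto. Qed.

Lemma nsum_nil N : nsum nil N = 1.
Proof. reflexivity. Qed.

Lemma even_2t t : Nat.even (2 * t) = true.
Proof. induction t. reflexivity. replace (2 * S t)%nat with (S (S (2 * t))) by lia. simpl. auto. Qed.

Lemma even_2t1 t : Nat.even (S (2 * t)) = false.
Proof. induction t. reflexivity. replace (S (2 * S t))%nat with (S (S (S (2 * t)))) by lia. simpl. auto. Qed.

Lemma nsum_odd f fs T : (forall t, f (S (S (2 * t))) = 0) ->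
  nsum (f :: fs) (2 * T) = ssum (fun t => f (S (2 * t)) * nsum fs (2 * t)) T.
Proof.
  intros H. rewrite nsum_cons, ssum_double. apply ssum_ext. intros t _. rewrite H. ring.
Qed.

Lemma nsum_odd_S f fs T : (forall t, f (S (S (2 * t))) = 0) ->
  nsum (f :: fs) (S (2 * T)) = ssum (fun t => f (S (2 * t)) * nsum fs (2 * t)) (S T).
Proof.
  intros H. rewrite nsum_cons, ssum_S, <- nsum_cons, nsum_odd; auto.
Qed.

Lemma nsum_even f fs T : (forall t, f (S (2 * t)) = 0) ->
  nsum (f :: fs) (2 * T) = ssum (fun t => f (S (S (2 * t))) * nsum fs (S (2 * t))) T.
Proof.
  intros H. rewrite nsum_cons, ssum_double. apply ssum_ext. intros t _. rewrite H. ring.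
Qed.

Lemma INR_odd t : INR (S (2 * t)) = 2 * INR t + 1.
Proof. rewrite S_INR, mult_INR. simpl. ring. Qed.

Lemma INR_even t : INR (S (S (2 * t))) = 2 * INR t + 2.
Proof. rewrite !S_INR, mult_INR. simpl. ring. Qed.

Lemma nsum_nonneg fs N : List.Forall (fun f => forall m, 0 <= f m) fs -> 0 <= nsum fs N.
Proof.
  revert N. induction fs; intros N H.
  - simpl. lra.
  - inversion H; subst. rewrite nsum_cons. apply ssum_nonneg. intros k _.
    apply Rmult_le_pos; auto.
Qed.

Lemma nsum_incr fs N : List.Forall (fun f => forall m, 0 <= f m) fs -> nsum fs N <= nsum fs (S N).
Proof.
  intros H. destruct fs as [|f fs]. simpl; lra.
  inversion H; subst. rewrite !nsum_cons. rewrite ssum_S.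
  assert (0 <= f (S N) * nsum fs N) by (apply Rmult_le_pos; auto; apply nsum_nonneg; auto). lra.
Qed.

Lemma nsum_mono fs N M : List.Forall (fun f => forall m, 0 <= f m) fs -> (N <= M)%nat -> nsum fs N <= nsum fs M.
Proof.
  intros H HNM. induction HNM. lra. pose proof (nsum_incr fs m H). lra.
Qed.

Lemma nseries_lim fs (l : R) : is_lim_seq (fun N => nsum fs N) l -> nseries fs = l.
Proof. intros H. unfold nseries. rewrite (is_lim_seq_unique _ _ H). reflexivity. Qed.

Lemma nonneg_series_lim (f : nat -> R) (C : R) :
  (forall t, 0 <= f t) -> (forall t, f t <= C * (Hs (S t) ^ 2 / (2 * INR t + 1) ^ 2)) ->
  exists l : R, is_lim_seq (fun T => ssum f T) l.
Proof.
  intros H0 H1. apply (incr_bounded_lim _ (Rabs C * 6)).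
  - intros n. rewrite ssum_S. specialize (H0 n). lra.
  - intros n. apply Rle_trans with (ssum (fun t => Rabs C * (Hs (S t) ^ 2 / (2 * INR t + 1) ^ 2)) n).
    + apply ssum_le. intros t _. eapply Rle_trans. apply H1. apply Rmult_le_compat_r.
      apply Rdiv_le_0_compat. apply pow2_ge_0. apply pow_lt, INR_pos_lin. apply Rle_abs.
    + rewrite ssum_scal. apply Rmult_le_compat_l. apply Rabs_pos. apply pot_bound.
Qed.


Lemma INR_ltS a b : (a < b)%nat -> INR a + 1 <= INR b.
Proof. intros H. rewrite <- S_INR. apply le_INR. lia. Qed.

Lemma Hs_refl t2 : ssum (fun t3 => / (2 * INR t2 + 2 - (2 * INR t3 + 1))) (S t2) = Hs (S t2).
Proof.
  unfold Hs. rewrite <- (ssum_rev (fun t => / (2 * INR t + 1))). apply ssum_ext. intros k Hk.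
  rewrite minus_INR by lia. rewrite !S_INR. f_equal. ring.
Qed.

Lemma P3_inner t1 :
  ssum (fun t2 => ssum (fun t3 => / ((2 * INR t1 + 1 - (2 * INR t2 + 2)) * (2 * INR t1 + 1 - (2 * INR t3 + 1)))) (S t2)) t1
  = Aodd t1.
Proof.
  unfold Aodd.
  transitivity (ssum (fun c => ssum (fun a => / ((2 * INR a + 1) * (2 * INR c + 2))) (S c)) t1).
  2:{ apply ssum_ext. intros c _. unfold Hs. unfold Rdiv. rewrite <- ssum_scal_r.
      apply ssum_ext. intros a _. pose proof (INR_pos_lin a). pose proof (pos_INR c). field. lra. }
  symmetry. rewrite tri_swap. symmetry. rewrite <- ssum_rev. apply ssum_ext. intros a Ha.
  replace (S (t1 - S a)) with (t1 - a)%nat by lia.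
  rewrite <- (ssum_rev _ (t1 - a)). apply ssum_ext. intros k Hk.
  rewrite !minus_INR by lia. rewrite !S_INR, !plus_INR. f_equal. ring.
Qed.

Definition ssum3 T (G : nat -> nat -> nat -> R) :=
  ssum (fun t1 => ssum (fun t2 => ssum (fun t3 => G t1 t2 t3) (S t2)) t1) T.

Definition RR1 w t1 t2 t3 := / ((2 * INR t3 + 1) ^ (w - 3) * ((2 * INR t2 + 2) - (2 * INR t3 + 1))
   * ((2 * INR t1 + 1) - (2 * INR t3 + 1)) * (2 * INR t1 + 1)).
Definition RR2 w t1 t2 t3 := / ((2 * INR t2 + 2) ^ (w - 3) * ((2 * INR t1 + 1) - (2 * INR t2 + 2))
   * ((2 * INR t2 + 2) - (2 * INR t3 + 1)) * (2 * INR t1 + 1)).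
Definition RR3 w t1 t2 t3 := / ((2 * INR t1 + 1) ^ (w - 2) * ((2 * INR t1 + 1) - (2 * INR t2 + 2))
   * ((2 * INR t1 + 1) - (2 * INR t3 + 1))).

Lemma powpos_nz x n : 0 < x -> x ^ n <> 0.
Proof. intros. apply pow_nonzero. lra. Qed.

Lemma P3_sum w T : ssum3 T (RR3 w) = ssum (fun t1 => / (2 * INR t1 + 1) ^ (w - 2) * Aodd t1) T.
Proof.
  unfold ssum3. apply ssum_ext. intros t1 _. rewrite <- P3_inner, <- ssum_scal.
  apply ssum_ext. intros t2 Ht2. rewrite <- ssum_scal. apply ssum_ext. intros t3 Ht3.
  unfold RR3. pose proof (INR_ltS _ _ Ht2). assert (INR t3 <= INR t2) by (apply le_INR; lia).
  pose proof (pos_INR t3). pose proof (powpos_nz (2 * INR t1 + 1) (w - 2) ltac:(lra)).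
  field. repeat split; lra.
Qed.

Lemma P2_sum w T : ssum3 T (RR2 w) =
  ssum (fun t2 => Hs (S t2) / (2 * INR t2 + 2) ^ (w - 3) *
     ssum (fun k => / ((2 * INR k + 1) * (2 * INR k + 1 + 2 * INR (S t2)))) (T - S t2)) T.
Proof.
  unfold ssum3.
  transitivity (ssum (fun t1 => ssum (fun t2 => Hs (S t2) * / ((2 * INR t2 + 2) ^ (w - 3) *
      ((2 * INR t1 + 1) - (2 * INR t2 + 2)) * (2 * INR t1 + 1))) t1) T).
  { apply ssum_ext. intros t1 _. apply ssum_ext. intros t2 Ht2.
    rewrite <- Hs_refl, <- ssum_scal_r. apply ssum_ext. intros t3 Ht3.
    unfold RR2. pose proof (INR_ltS _ _ Ht2). assert (INR t3 <= INR t2) by (apply le_INR; lia).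
    pose proof (pos_INR t3). pose proof (powpos_nz (2 * INR t2 + 2) (w - 3) ltac:(lra)).
    field. repeat split; lra. }
  rewrite tri_swap_strict. apply ssum_ext. intros t2 Ht2.
  unfold Rdiv. rewrite <- ssum_scal. apply ssum_ext. intros k Hk.
  rewrite plus_INR, !S_INR. pose proof (pos_INR t2). pose proof (pos_INR k).
  pose proof (powpos_nz (2 * INR t2 + 2) (w - 3) ltac:(lra)).
  field. repeat split; lra.
Qed.

Lemma P1_sum w T : (3 <= w)%nat -> ssum3 T (RR1 w) =
  ssum (fun t3 => / (2 * INR t3 + 1) ^ (w - 2) * Dn t3 (T - S t3)) T.
Proof.
  intros Hw. unfold ssum3.
  transitivity (ssum (fun t1 => ssum (fun t3 => Hs (t1 - t3) * / ((2 * INR t3 + 1) ^ (w - 3) *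
      ((2 * INR t1 + 1) - (2 * INR t3 + 1)) * (2 * INR t1 + 1))) t1) T).
  { apply ssum_ext. intros t1 _. rewrite tri_swap. apply ssum_ext. intros t3 Ht3.
    unfold Hs. rewrite <- ssum_scal_r. apply ssum_ext. intros k Hk.
    unfold RR1. rewrite plus_INR. pose proof (INR_ltS _ _ Ht3). pose proof (pos_INR k).
    pose proof (pos_INR t3).
    pose proof (powpos_nz (2 * INR t3 + 1) (w - 3) ltac:(lra)).
    field. repeat split; lra. }
  rewrite tri_swap_strict. apply ssum_ext. intros t3 Ht3.
  unfold Dn. rewrite <- ssum_scal. apply ssum_ext. intros k Hk.
  replace (S t3 + k - t3)%nat with (S k) by lia.
  replace (w - 2)%nat with (S (w - 3)) by lia. simpl pow.
  rewrite plus_INR, !S_INR. pose proof (pos_INR t3). pose proof (pos_INR k).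
  pose proof (powpos_nz (2 * INR t3 + 1) (w - 3) ltac:(lra)).
  field. repeat split; lra.
Qed.


Lemma ssum3_ext T G H : (forall t1 t2 t3, (t2 < t1)%nat -> (t3 <= t2)%nat -> G t1 t2 t3 = H t1 t2 t3) ->
  ssum3 T G = ssum3 T H.
Proof.
  intros E. unfold ssum3. apply ssum_ext. intros. apply ssum_ext. intros. apply ssum_ext. intros.
  apply E; lia.
Qed.

Lemma ssum3_plus T G H : ssum3 T (fun a b c => G a b c + H a b c) = ssum3 T G + ssum3 T H.
Proof.
  unfold ssum3. rewrite <- ssum_plus. apply ssum_ext. intros. rewrite <- ssum_plus.
  apply ssum_ext. intros. apply ssum_plus.
Qed.

Lemma ssum3_minus T G H : ssum3 T (fun a b c => G a b c - H a b c) = ssum3 T G - ssum3 T H.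
Proof.
  unfold ssum3. rewrite <- ssum_minus. apply ssum_ext. intros. rewrite <- ssum_minus.
  apply ssum_ext. intros. apply ssum_minus.
Qed.

Lemma ssum3_scal T c G : ssum3 T (fun a b d => c * G a b d) = c * ssum3 T G.
Proof.
  unfold ssum3. rewrite <- ssum_scal. apply ssum_ext. intros. rewrite <- ssum_scal.
  apply ssum_ext. intros. apply ssum_scal.
Qed.

Lemma ssum3_sfr T w (G : nat -> nat -> nat -> nat -> R) :
  sum_f_R0 (fun a => ssum3 T (G a)) w = ssum3 T (fun t1 t2 t3 => sum_f_R0 (fun a => G a t1 t2 t3) w).
Proof.
  induction w; simpl. auto. rewrite IHw. rewrite <- ssum3_plus. auto.
Qed.

Lemma ssum3_ite T (b : bool) G : (if b then ssum3 T G else 0) = ssum3 T (fun t1 t2 t3 => if b then G t1 t2 t3 else 0).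
Proof.
  destruct b; auto. unfold ssum3. symmetry. apply ssum_zero_ext. intros. apply ssum_zero_ext.
  intros. apply ssum_zero_ext. auto.
Qed.

Definition Tlist (s : list nat) := map (fun i => Tfactor (length s) i (nth i s O)) (seq 0 (length s)).

Lemma Tf_odd d i s t : Nat.even (d - i) = false ->
  Tfactor d i s (S (2 * t)) = 2 / INR (S (2 * t)) ^ s /\ Tfactor d i s (S (S (2 * t))) = 0.
Proof.
  intros E. unfold Tfactor. rewrite E. rewrite even_2t1.
  replace (Nat.even (S (S (2 * t)))) with true by (symmetry; change (Nat.even (2 * t) = true); apply even_2t). auto.
Qed.

Lemma Tf_even d i s t : Nat.even (d - i) = true ->
  Tfactor d i s (S (S (2 * t))) = 2 / INR (S (S (2 * t))) ^ s /\ Tfactor d i s (S (2 * t)) = 0.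
Proof.
  intros E. unfold Tfactor. rewrite E. rewrite even_2t1.
  replace (Nat.even (S (S (2 * t)))) with true by (symmetry; change (Nat.even (2 * t) = true); apply even_2t). auto.
Qed.

Lemma nsum_T3 a b c T : nsum (Tlist (a :: b :: c :: nil)) (2 * T) =
  ssum3 T (fun t1 t2 t3 => 2 / INR (S (2 * t1)) ^ a * (2 / INR (S (S (2 * t2))) ^ b *
                         (2 / INR (S (2 * t3)) ^ c * 1))).
Proof.
  unfold Tlist. simpl length. simpl map.
  rewrite nsum_odd by (intros; apply (Tf_odd 3 0); reflexivity).
  unfold ssum3. apply ssum_ext. intros t1 _.
  rewrite nsum_even by (intros; apply (Tf_even 3 1); reflexivity).
  rewrite (proj1 (Tf_odd 3 0 a t1 eq_refl)). rewrite <- ssum_scal. apply ssum_ext. intros t2 _.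
  rewrite nsum_odd_S by (intros; apply (Tf_odd 3 2); reflexivity).
  rewrite (proj1 (Tf_even 3 1 b t2 eq_refl)). rewrite <- ssum_scal, <- ssum_scal. apply ssum_ext. intros t3 _.
  rewrite (proj1 (Tf_odd 3 2 c t3 eq_refl)). reflexivity.
Qed.

Definition LHSN w N := sum_f_R0 (fun a => sum_f_R0 (fun b => sum_f_R0 (fun c =>
      if (Nat.eqb (a + b + c) w && Nat.leb 2 a && Nat.leb 1 b && Nat.leb 1 c)%bool
      then nsum (Tlist (a :: b :: c :: nil)) N else 0) w) w) w.

Lemma LHS_fin w T : (4 <= w)%nat ->
  LHSN w (2 * T) = 8 * (ssum3 T (RR1 w) - ssum3 T (RR2 w) + ssum3 T (RR3 w)).
Proof.
  intros Hw. unfold LHSN.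
  set (P := fun a b c t1 t2 t3 => 2 / INR (S (2 * t1)) ^ a * (2 / INR (S (S (2 * t2))) ^ b *
                         (2 / INR (S (2 * t3)) ^ c * 1))).
  set (cnd := fun a b c => (Nat.eqb (a + b + c) w && Nat.leb 2 a && Nat.leb 1 b && Nat.leb 1 c)%bool).
  transitivity (sum_f_R0 (fun a => sum_f_R0 (fun b => sum_f_R0 (fun c =>
      ssum3 T (fun t1 t2 t3 => if cnd a b c then P a b c t1 t2 t3 else 0)) w) w) w).
  { apply sum_eq. intros a _. apply sum_eq. intros b _. apply sum_eq. intros c _.
    rewrite <- ssum3_ite. rewrite nsum_T3. reflexivity. }
  transitivity (ssum3 T (fun t1 t2 t3 => sum_f_R0 (fun a => sum_f_R0 (fun b => sum_f_R0 (fun c =>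
      if cnd a b c then P a b c t1 t2 t3 else 0) w) w) w)).
  { rewrite <- ssum3_sfr. apply sum_eq. intros a _. rewrite <- ssum3_sfr. apply sum_eq. intros b _.
    rewrite <- ssum3_sfr. reflexivity. }
  rewrite <- ssum3_minus, <- ssum3_plus, <- ssum3_scal.
  apply ssum3_ext. intros t1 t2 t3 H12 H23.
  unfold cnd, P.
  rewrite triple_alg; auto.
  - unfold RR1, RR2, RR3. rewrite !INR_odd, !INR_even. reflexivity.
  - rewrite INR_odd. pose proof (pos_INR t3). lra.
  - rewrite INR_odd, INR_even. assert (INR t3 <= INR t2) by (apply le_INR; lia). lra.
  - rewrite INR_odd, INR_even. pose proof (INR_ltS _ _ H12). lra.
Qed.


Lemma pow_ge_2 x n : 1 <= x -> (2 <= n)%nat -> x ^ 2 <= x ^ n.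
Proof. intros. apply Rle_pow; auto. Qed.

Lemma inv_pow_le x n : 1 <= x -> (2 <= n)%nat -> / x ^ n <= / x ^ 2.
Proof.
  intros. apply Rinv_le_contravar. apply pow_lt; lra. apply pow_ge_2; auto.
Qed.

Lemma Aodd_nonneg t : 0 <= Aodd t.
Proof.
  unfold Aodd. apply ssum_nonneg. intros. apply Rdiv_le_0_compat. apply Hs_nonneg.
  pose proof (pos_INR k). lra.
Qed.

Lemma Aodd_le t : Aodd t <= Hs (S t) ^ 2.
Proof.
  unfold Aodd. apply Rle_trans with (ssum (fun k => Hs (S t) * / (2 * INR k + 1)) t).
  - apply ssum_le. intros k Hk. unfold Rdiv. apply Rmult_le_compat.
    apply Hs_nonneg. pose proof (pos_INR k). left; apply Rinv_0_lt_compat; lra.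
    apply Hs_mono; lia. apply Rinv_le_contravar. apply INR_pos_lin. lra.
  - rewrite ssum_scal. fold (Hs t). pose proof (Hs_mono t (S t) ltac:(lia)).
    pose proof (Hs_nonneg t). simpl. nra.
Qed.

Lemma odd_pow_bound w t : (4 <= w)%nat ->
  / (2 * INR t + 1) ^ (w - 2) <= 1 * (Hs (S t) ^ 2 / (2 * INR t + 1) ^ 2).
Proof.
  intros Hw. rewrite Rmult_1_l. eapply Rle_trans. apply inv_pow_le. pose proof (pos_INR t). lra. lia.
  apply So_term_le.
Qed.

Lemma X1_exists w : (4 <= w)%nat -> exists l : R, is_lim_seq (fun T => ssum (fun t => / (2 * INR t + 1) ^ (w - 2)) T) l.
Proof.
  intros Hw. apply (nonneg_series_lim _ 1).
  - intros t. left. apply Rinv_0_lt_compat, pow_lt, INR_pos_lin.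
  - intros t. apply odd_pow_bound; auto.
Qed.

Lemma Z1_exists w : (4 <= w)%nat -> exists l : R, is_lim_seq (fun T => ssum (fun t => / (2 * INR t + 1) ^ (w - 2) * Aodd t) T) l.
Proof.
  intros Hw. apply (nonneg_series_lim _ 1).
  - intros t. apply Rmult_le_pos. left. apply Rinv_0_lt_compat, pow_lt, INR_pos_lin. apply Aodd_nonneg.
  - intros t. rewrite Rmult_1_l. pose proof (INR_pos_lin t). pose proof (pos_INR t).
    apply Rle_trans with (/ (2 * INR t + 1) ^ 2 * Hs (S t) ^ 2).
    + apply Rmult_le_compat. left. apply Rinv_0_lt_compat, pow_lt, INR_pos_lin. apply Aodd_nonneg.
      apply inv_pow_le; [lra|lia]. apply Aodd_le.
    + unfold Rdiv. right. ring.
Qed.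

Lemma W_exists w : (4 <= w)%nat -> exists l : R, is_lim_seq (fun T => ssum (fun t => Hs (S t) ^ 2 / (2 * INR t + 2) ^ (w - 2)) T) l.
Proof.
  intros Hw. apply (nonneg_series_lim _ 1).
  - intros t. apply Rdiv_le_0_compat. apply pow2_ge_0. apply pow_lt. pose proof (pos_INR t). lra.
  - intros t. rewrite Rmult_1_l. pose proof (pos_INR t). unfold Rdiv. apply Rmult_le_compat_l.
    apply pow2_ge_0. eapply Rle_trans. apply inv_pow_le; [lra|lia].
    apply Rinv_le_contravar. apply pow_lt; lra. apply pow_incr. lra.
Qed.

Definition lim_of (u : nat -> R) : R := real (Lim_seq u).

Lemma lim_of_correct u (l : R) : is_lim_seq u l -> lim_of u = l.
Proof. intros H. unfold lim_of. rewrite (is_lim_seq_unique _ _ H). reflexivity. Qed.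

Lemma ex_lim_of u : (exists l : R, is_lim_seq u l) -> is_lim_seq u (lim_of u).
Proof. intros [l H]. rewrite (lim_of_correct _ _ H). auto. Qed.

Definition X1s w T := ssum (fun t => / (2 * INR t + 1) ^ (w - 2)) T.
Definition Z1s w T := ssum (fun t => / (2 * INR t + 1) ^ (w - 2) * Aodd t) T.
Definition Ws w T := ssum (fun t => Hs (S t) ^ 2 / (2 * INR t + 2) ^ (w - 2)) T.

Lemma Dn_nonneg s J : 0 <= Dn s J.
Proof. unfold Dn. apply ssum_nonneg. intros. apply Dn_term_nonneg. Qed.

Lemma Dn_mono s J J' : (J <= J')%nat -> Dn s J <= Dn s J'.
Proof. intros. unfold Dn. apply ssum_mono; auto. intros. apply Dn_term_nonneg. Qed.

Lemma tele_term_pos k i : 0 < / ((2 * INR k + 1) * (2 * INR k + 1 + 2 * INR (S i))).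
Proof.
  apply Rinv_0_lt_compat. pose proof (INR_pos_lin k). pose proof (pos_INR (S i)).
  apply Rmult_lt_0_compat; lra.
Qed.

Lemma LHS_lim2 w : (4 <= w)%nat ->
  is_lim_seq (fun T => LHSN w (2 * T))
    (8 * ((lim_of (Z1s w) + So / 3 * lim_of (X1s w)) - lim_of (Ws w) + lim_of (Z1s w))).
Proof.
  intros Hw.
  pose proof (ex_lim_of _ (X1_exists w Hw)) as HX. fold (X1s w) in HX.
  pose proof (ex_lim_of _ (Z1_exists w Hw)) as HZ. fold (Z1s w) in HZ.
  pose proof (ex_lim_of _ (W_exists w Hw)) as HW. fold (Ws w) in HW.
  apply is_lim_seq_ext with (fun T => 8 * (ssum3 T (RR1 w) - ssum3 T (RR2 w) + ssum3 T (RR3 w))).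
  { intros T. rewrite LHS_fin; auto. }
  apply is_lim_seq_scal_l with (a := 8)
    (lu := (lim_of (Z1s w) + So / 3 * lim_of (X1s w)) - lim_of (Ws w) + lim_of (Z1s w)).
  apply is_lim_seq_plus'; [apply is_lim_seq_minus'|].
  -
    apply is_lim_seq_ext with (fun T => ssum (fun t3 => / (2 * INR t3 + 1) ^ (w - 2) * Dn t3 (T - S t3)) T).
    { intros T. rewrite P1_sum; auto. lia. }
    apply L1 with (G := fun t3 => / (2 * INR t3 + 1) ^ (w - 2) * (Aodd t3 + So / 3)).
    + intros T i. apply Rmult_le_pos. left. apply Rinv_0_lt_compat, pow_lt, INR_pos_lin. apply Dn_nonneg.
    + intros T i. apply Rmult_le_compat_l. left. apply Rinv_0_lt_compat, pow_lt, INR_pos_lin.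
      apply Dn_mono. lia.
    + intros i. apply is_lim_seq_scal_l with (lu := Aodd i + So / 3). apply lim_shift_sub. apply Dn_lim.
    + apply is_lim_seq_ext with (fun T => Z1s w T + So / 3 * X1s w T).
      { intros T. unfold Z1s, X1s. rewrite <- ssum_scal, <- ssum_plus. apply ssum_ext. intros. ring. }
      apply is_lim_seq_plus'; auto. apply is_lim_seq_scal_l with (lu := lim_of (X1s w)). auto.
  -
    apply is_lim_seq_ext with (fun T => ssum (fun t2 => Hs (S t2) / (2 * INR t2 + 2) ^ (w - 3) *
       ssum (fun k => / ((2 * INR k + 1) * (2 * INR k + 1 + 2 * INR (S t2)))) (T - S t2)) T).
    { intros T. rewrite P2_sum; auto. }
    apply L1 with (G := fun t2 => Hs (S t2) / (2 * INR t2 + 2) ^ (w - 3) * (Hs (S t2) / (2 * INR (S t2)))).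
    + intros T i. apply Rmult_le_pos. apply Rdiv_le_0_compat. apply Hs_nonneg.
      apply pow_lt. pose proof (pos_INR i); lra.
      apply ssum_nonneg. intros. left. apply tele_term_pos.
    + intros T i. apply Rmult_le_compat_l. apply Rdiv_le_0_compat. apply Hs_nonneg.
      apply pow_lt. pose proof (pos_INR i); lra.
      apply ssum_mono; [|lia]. intros. left. apply tele_term_pos.
    + intros i. apply is_lim_seq_scal_l with (lu := Hs (S i) / (2 * INR (S i))). apply lim_shift_sub.
      apply tele_lim.
    + apply is_lim_seq_ext with (Ws w); auto.
      intros T. unfold Ws. apply ssum_ext. intros t _. rewrite S_INR.
      replace (w - 2)%nat with (S (w - 3)) by lia. simpl pow. pose proof (pos_INR t).
      pose proof (powpos_nz (2 * INR t + 2) (w - 3) ltac:(lra)). field. lra.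
  -
    apply is_lim_seq_ext with (Z1s w); auto. intros T. rewrite P3_sum. reflexivity.
Qed.


Lemma inv_nonneg x : 0 <= x -> 0 <= / x.
Proof. intros. destruct (Req_dec x 0). subst. rewrite Rinv_0. lra. left. apply Rinv_0_lt_compat. lra. Qed.

Lemma Tfactor_nonneg d i s m : 0 <= Tfactor d i s m.
Proof.
  unfold Tfactor. destruct (Bool.eqb _ _); [|lra]. unfold Rdiv. apply Rmult_le_pos. lra.
  apply inv_nonneg. apply pow_le. apply pos_INR.
Qed.

Lemma Tlist_nonneg s : List.Forall (fun f => forall m, 0 <= f m) (Tlist s).
Proof.
  unfold Tlist. generalize (seq 0 (length s)). intros l. induction l; simpl; constructor; auto.
  intros. apply Tfactor_nonneg.
Qed.

Lemma ssum3_le T G H : (forall t1 t2 t3, (t2 < t1)%nat -> (t3 <= t2)%nat -> G t1 t2 t3 <= H t1 t2 t3) ->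
  ssum3 T G <= ssum3 T H.
Proof.
  intros E. unfold ssum3. apply ssum_le. intros. apply ssum_le. intros. apply ssum_le. intros.
  apply E; lia.
Qed.

Lemma T3_bound a b c T : (2 <= a)%nat -> (1 <= b)%nat -> (1 <= c)%nat ->
  nsum (Tlist (a :: b :: c :: nil)) (2 * T) <= 48.
Proof.
  intros Ha Hb Hc. rewrite nsum_T3.
  apply Rle_trans with (ssum3 T (fun t1 t2 t3 => 8 * (/ (2 * INR t1 + 1) ^ 2 * (/ (2 * INR t2 + 1) * / (2 * INR t3 + 1))))).
  { apply ssum3_le. intros t1 t2 t3 _ _. rewrite INR_odd, INR_even, INR_odd.
    pose proof (pos_INR t1). pose proof (pos_INR t2). pose proof (pos_INR t3).
    assert (A1 : / (2 * INR t1 + 1) ^ a <= / (2 * INR t1 + 1) ^ 2) by (apply inv_pow_le; [lra|lia]).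
    assert (A2 : / (2 * INR t2 + 2) ^ b <= / (2 * INR t2 + 1)).
    { apply Rinv_le_contravar. lra. replace (2 * INR t2 + 1) with ((2 * INR t2 + 1) ^ 1) by ring.
      apply Rle_trans with ((2 * INR t2 + 1) ^ b). apply Rle_pow; [lra|lia]. apply pow_incr; lra. }
    assert (A3 : / (2 * INR t3 + 1) ^ c <= / (2 * INR t3 + 1)).
    { apply Rinv_le_contravar. lra. replace (2 * INR t3 + 1) with ((2 * INR t3 + 1) ^ 1) at 1 by ring.
      apply Rle_pow; [lra|lia]. }
    assert (0 <= / (2 * INR t1 + 1) ^ a) by (left; apply Rinv_0_lt_compat, pow_lt; lra).
    assert (0 <= / (2 * INR t2 + 2) ^ b) by (left; apply Rinv_0_lt_compat, pow_lt; lra).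
    assert (0 <= / (2 * INR t3 + 1) ^ c) by (left; apply Rinv_0_lt_compat, pow_lt; lra).
    assert (0 <= / (2 * INR t2 + 1)) by (left; apply Rinv_0_lt_compat; lra).
    unfold Rdiv. rewrite Rmult_1_r.
    replace (2 * / (2 * INR t1 + 1) ^ a * (2 * / (2 * INR t2 + 2) ^ b * (2 * / (2 * INR t3 + 1) ^ c)))
      with (8 * (/ (2 * INR t1 + 1) ^ a * (/ (2 * INR t2 + 2) ^ b * / (2 * INR t3 + 1) ^ c))) by ring.
    apply Rmult_le_compat_l. lra. apply Rmult_le_compat; auto. apply Rmult_le_pos; auto.
    apply Rmult_le_compat; auto. }
  rewrite ssum3_scal. replace 48 with (8 * 6) by ring. apply Rmult_le_compat_l. lra.
  eapply Rle_trans; [|apply (pot_bound T)]. unfold ssum3. apply ssum_le. intros t1 _.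
  set (cc := / (2 * INR t1 + 1) ^ 2).
  transitivity (cc * ssum (fun t2 => / (2 * INR t2 + 1) * Hs (S t2)) t1).
  { rewrite <- ssum_scal. right. apply ssum_ext. intros t2 _. unfold Hs.
    rewrite <- !ssum_scal. reflexivity. }
  assert (0 <= cc) by (left; apply Rinv_0_lt_compat, pow_lt, INR_pos_lin).
  apply Rle_trans with (cc * (Hs t1 * Hs t1)).
  - apply Rmult_le_compat_l; auto.
    replace (Hs t1 * Hs t1) with (ssum (fun t2 => / (2 * INR t2 + 1) * Hs t1) t1)
      by (rewrite ssum_scal_r; reflexivity).
    apply ssum_le. intros t2 Ht2. apply Rmult_le_compat_l.
    left; apply Rinv_0_lt_compat, INR_pos_lin. apply Hs_mono. lia.
  - unfold cc, Rdiv. rewrite (Rmult_comm (Hs (S t1) ^ 2)). apply Rmult_le_compat_l; auto.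
    pose proof (Hs_mono t1 (S t1) ltac:(lia)). pose proof (Hs_nonneg t1). simpl. nra.
Qed.

Lemma sfr_lim (F : nat -> nat -> R) (L : nat -> R) n :
  (forall a, (a <= n)%nat -> is_lim_seq (F a) (L a)) ->
  is_lim_seq (fun N => sum_f_R0 (fun a => F a N) n) (sum_f_R0 L n).
Proof.
  induction n; intros H; simpl. apply H; lia.
  apply is_lim_seq_plus'. apply IHn. intros; apply H; lia. apply H; lia.
Qed.

Lemma T3_lim a b c : (2 <= a)%nat -> (1 <= b)%nat -> (1 <= c)%nat ->
  is_lim_seq (nsum (Tlist (a :: b :: c :: nil))) (Tval (a :: b :: c :: nil)).
Proof.
  intros Ha Hb Hc.
  assert (E : exists l : R, is_lim_seq (nsum (Tlist (a :: b :: c :: nil))) l).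
  { apply (incr_bounded_lim _ 48).
    - intros n. apply nsum_incr. apply Tlist_nonneg.
    - intros n. eapply Rle_trans. apply (nsum_mono _ n (2 * n)). apply Tlist_nonneg. lia.
      apply T3_bound; auto. }
  destruct E as [l Hl]. change (Tval (a :: b :: c :: nil)) with (nseries (Tlist (a :: b :: c :: nil))).
  rewrite (nseries_lim _ l); auto.
Qed.

Lemma LHS_value w : (4 <= w)%nat ->
  sum_f_R0 (fun a => sum_f_R0 (fun b => sum_f_R0 (fun c =>
      if (Nat.eqb (a + b + c) w && Nat.leb 2 a && Nat.leb 1 b && Nat.leb 1 c)%bool
      then Tval (a :: b :: c :: nil) else 0) w) w) w
  = 8 * ((lim_of (Z1s w) + So / 3 * lim_of (X1s w)) - lim_of (Ws w) + lim_of (Z1s w)).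
Proof.
  intros Hw.
  assert (H : is_lim_seq (LHSN w) (sum_f_R0 (fun a => sum_f_R0 (fun b => sum_f_R0 (fun c =>
      if (Nat.eqb (a + b + c) w && Nat.leb 2 a && Nat.leb 1 b && Nat.leb 1 c)%bool
      then Tval (a :: b :: c :: nil) else 0) w) w) w)).
  { unfold LHSN. apply sfr_lim. intros a _. apply sfr_lim. intros b _. apply sfr_lim. intros c _.
    destruct (Nat.eqb (a + b + c) w && Nat.leb 2 a && Nat.leb 1 b && Nat.leb 1 c)%bool eqn:E.
    - apply Bool.andb_true_iff in E as [E E4]. apply Bool.andb_true_iff in E as [E E3].
      apply Bool.andb_true_iff in E as [E1 E2]. apply Nat.leb_le in E2, E3, E4.
      apply T3_lim; auto.
    - apply is_lim_seq_const. }
  apply lim_double in H. pose proof (LHS_lim2 w Hw) as H2.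
  assert (U := is_lim_seq_unique _ _ H). rewrite (is_lim_seq_unique _ _ H2) in U.
  injection U. auto.
Qed.


Lemma T1_lim s (l : R) : is_lim_seq (fun T => ssum (fun t => 2 / (2 * INR t + 1) ^ s) T) l ->
  Tval (s :: nil) = l.
Proof.
  intros H. change (Tval (s :: nil)) with (nseries (Tlist (s :: nil))). apply nseries_lim.
  apply lim_from_double. intros n. apply nsum_incr. apply Tlist_nonneg.
  apply is_lim_seq_ext with (2 := H). intros T. unfold Tlist. simpl length. simpl map.
  rewrite nsum_odd by (intros; apply (Tf_odd 1 0); reflexivity).
  apply ssum_ext. intros t _. rewrite (proj1 (Tf_odd 1 0 s t eq_refl)). rewrite INR_odd. simpl. ring.
Qed.

Lemma T2_value : Tval (2%nat :: nil) = 2 * So.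
Proof.
  apply T1_lim. apply is_lim_seq_ext with (fun T => 2 * So_seq T).
  { intros T. unfold So_seq. rewrite <- ssum_scal. apply ssum_ext. intros. unfold Rdiv. ring. }
  apply is_lim_seq_scal_l with (lu := So). apply So_lim.
Qed.

Lemma Tu_value w : (4 <= w)%nat -> Tval ((w - 2)%nat :: nil) = 2 * lim_of (X1s w).
Proof.
  intros Hw. apply T1_lim. apply is_lim_seq_ext with (fun T => 2 * X1s w T).
  { intros T. unfold X1s. rewrite <- ssum_scal. apply ssum_ext. intros. unfold Rdiv. ring. }
  apply is_lim_seq_scal_l with (lu := lim_of (X1s w)). apply ex_lim_of. apply X1_exists; auto.
Qed.

Definition Ys w T := ssum (fun t => So_seq (S t) / (2 * INR t + 2) ^ (w - 2)) T.

Lemma So_seq_le_Hs t : So_seq t <= Hs t.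
Proof.
  unfold So_seq, Hs. apply ssum_le. intros k _. pose proof (INR_pos_lin k). pose proof (pos_INR k).
  apply Rinv_le_contravar. lra. simpl. nra.
Qed.

Lemma Y_exists w : (4 <= w)%nat -> exists l : R, is_lim_seq (Ys w) l.
Proof.
  intros Hw. apply (nonneg_series_lim _ 1).
  - intros t. apply Rdiv_le_0_compat. unfold So_seq. apply ssum_nonneg. intros. left.
    apply Rinv_0_lt_compat, pow_lt, INR_pos_lin. apply pow_lt. pose proof (pos_INR t). lra.
  - intros t. rewrite Rmult_1_l. pose proof (pos_INR t). unfold Rdiv.
    apply Rmult_le_compat.
    + unfold So_seq. apply ssum_nonneg. intros. left. apply Rinv_0_lt_compat, pow_lt, INR_pos_lin.
    + left. apply Rinv_0_lt_compat, pow_lt. lra.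
    + eapply Rle_trans. apply So_seq_le_Hs. pose proof (Hs_ge1 t). simpl. nra.
    + eapply Rle_trans. apply inv_pow_le; [lra|lia].
      apply Rinv_le_contravar. apply pow_lt; lra. apply pow_incr. lra.
Qed.

Lemma Tu2_value w : (4 <= w)%nat -> Tval ((w - 2)%nat :: 2%nat :: nil) = 4 * lim_of (Ys w).
Proof.
  intros Hw. change (Tval ((w - 2)%nat :: 2%nat :: nil)) with (nseries (Tlist ((w - 2)%nat :: 2%nat :: nil))).
  apply nseries_lim. apply lim_from_double. intros n. apply nsum_incr. apply Tlist_nonneg.
  apply is_lim_seq_ext with (fun T => 4 * Ys w T).
  { intros T. symmetry. unfold Tlist. simpl length. simpl map.
    rewrite nsum_even by (intros; apply (Tf_even 2 0); reflexivity).
    unfold Ys. rewrite <- ssum_scal. apply ssum_ext. intros t _.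
    rewrite (proj1 (Tf_even 2 0 _ t eq_refl)).
    rewrite nsum_odd_S by (intros; apply (Tf_odd 2 1); reflexivity).
    unfold So_seq. rewrite INR_even.
    transitivity (2 / (2 * INR t + 2) ^ (w - 2) * (2 * ssum (fun t0 => / (2 * INR t0 + 1) ^ 2) (S t))).
    2:{ unfold Rdiv. ring. }
    f_equal. rewrite <- ssum_scal. apply ssum_ext. intros t0 _.
    rewrite (proj1 (Tf_odd 2 1 _ t0 eq_refl)). rewrite INR_odd. simpl. unfold Rdiv. ring. }
  apply is_lim_seq_scal_l with (lu := lim_of (Ys w)). apply ex_lim_of. apply Y_exists; auto.
Qed.


Definition Hf (k : nat) : R := ssum (fun j => / INR (S j)) k.

Lemma Hf_nonneg k : 0 <= Hf k.
Proof. unfold Hf. apply ssum_nonneg. intros. left. apply Rinv_0_lt_compat, lt_0_INR. lia. Qed.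

Lemma Hf_even t : Hf (2 * t) <= 2 * Hs t.
Proof.
  unfold Hf, Hs. rewrite ssum_double. rewrite <- ssum_scal. apply ssum_le. intros k _.
  rewrite INR_odd, INR_even.
  pose proof (pos_INR k).
  assert (/ (2 * INR k + 2) <= / (2 * INR k + 1)) by (apply Rinv_le_contravar; lra). lra.
Qed.

Lemma Hf_le t k : (k <= S (2 * t))%nat -> Hf k <= 2 * Hs (S t).
Proof.
  intros Hk. apply Rle_trans with (Hf (S (2 * t))).
  { unfold Hf. apply ssum_mono; auto. intros. left. apply Rinv_0_lt_compat, lt_0_INR. lia. }
  unfold Hf. rewrite ssum_S. fold (Hf (2 * t)). pose proof (Hf_even t). rewrite Hs_S.
  rewrite INR_odd. pose proof (INR_pos_lin t). assert (0 < / (2 * INR t + 1)) by (apply Rinv_0_lt_compat; lra).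
  lra.
Qed.

Lemma abs_le_inv_pow x n : 1 <= x -> (1 <= n)%nat -> Rabs (/ x ^ n) <= / x.
Proof.
  intros. rewrite Rabs_right. apply Rinv_le_contravar. lra.
  replace x with (x ^ 1) at 1 by ring. apply Rle_pow; auto.
  left. apply Rinv_0_lt_compat, pow_lt. lra.
Qed.

Lemma nsum2_bound (g h : nat -> R) k :
  (forall m, Rabs (g (S m)) <= / INR (S m)) -> (forall m, Rabs (h (S m)) <= / INR (S m)) ->
  Rabs (nsum (g :: h :: nil) k) <= Hf k ^ 2.
Proof.
  intros Hg Hh. rewrite nsum_cons.
  apply Rle_trans with (ssum (fun j => / INR (S j) * Hf k) k).
  - induction k. simpl. rewrite Rabs_R0. lra.
    rewrite !ssum_S. eapply Rle_trans. apply Rabs_triang.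
    apply Rplus_le_compat.
    + eapply Rle_trans. apply IHk. apply ssum_le. intros j _. apply Rmult_le_compat_l.
      left. apply Rinv_0_lt_compat, lt_0_INR. lia. unfold Hf. rewrite ssum_S.
      assert (0 < / INR (S k)) by (apply Rinv_0_lt_compat, lt_0_INR; lia). lra.
    + rewrite Rabs_mult. apply Rmult_le_compat; try apply Rabs_pos. auto.
      rewrite nsum_cons. apply Rle_trans with (ssum (fun j => / INR (S j)) k).
      * clear IHk. induction k. simpl. rewrite Rabs_R0. lra. rewrite !ssum_S.
        eapply Rle_trans. apply Rabs_triang. simpl nsum. rewrite Rmult_1_r. apply Rplus_le_compat; auto.
      * unfold Hf. rewrite ssum_S. assert (0 < / INR (S k)) by (apply Rinv_0_lt_compat, lt_0_INR; lia). lra.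
  - rewrite ssum_scal_r. fold (Hf k). simpl. lra.
Qed.

Definition ef (s : nat) (b : bool) (m : nat) : R := (if b then (-1) ^ m else 1) / INR m ^ s.

Lemma Ezeta_eq s1 b1 s2 b2 s3 b3 :
  Ezeta ((s1, b1) :: (s2, b2) :: (s3, b3) :: nil) = nseries (ef s1 b1 :: ef s2 b2 :: ef s3 b3 :: nil).
Proof. reflexivity. Qed.

Lemma ef_abs s b m : Rabs (ef s b (S m)) = / INR (S m) ^ s.
Proof.
  unfold ef. unfold Rdiv. rewrite Rabs_mult. rewrite (Rabs_right (/ _)).
  2:{ left. apply Rinv_0_lt_compat, pow_lt, lt_0_INR. lia. }
  destruct b. rewrite pow_1_abs. ring.
  rewrite Rabs_R1. ring.
Qed.

Lemma ef_bound1 b m : Rabs (ef 1 b (S m)) <= / INR (S m).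
Proof. rewrite ef_abs. simpl. rewrite Rmult_1_r. lra. Qed.

Lemma ef_bound2 s b m : (2 <= s)%nat -> Rabs (ef s b (S m)) <= / INR (S m) ^ 2.
Proof. intros. rewrite ef_abs. apply inv_pow_le; auto. rewrite S_INR. pose proof (pos_INR m). lra. Qed.

Lemma E3_lim s b1 b2 b3 : (2 <= s)%nat ->
  exists l : R, is_lim_seq (nsum (ef s b1 :: ef 1 b2 :: ef 1 b3 :: nil)) l.
Proof.
  intros Hs2.
  set (a := fun k => ef s b1 (S k) * nsum (ef 1 b2 :: ef 1 b3 :: nil) k).
  set (b := fun k => / INR (S k) ^ 2 * Hf k ^ 2).
  assert (Hab : forall k, norm (a k) <= b k).
  { intros k. change (norm (a k)) with (Rabs (a k)). unfold a, b. rewrite Rabs_mult.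
    apply Rmult_le_compat; try apply Rabs_pos. apply ef_bound2; auto.
    apply nsum2_bound; intros; apply ef_bound1. }
  assert (Hb0 : forall k, 0 <= b k).
  { intros k. unfold b. apply Rmult_le_pos. left. apply Rinv_0_lt_compat, pow_lt, lt_0_INR; lia.
    apply pow2_ge_0. }
  assert (Hbb : forall T, ssum b (2 * T) <= 48).
  { intros T. rewrite ssum_double. replace 48 with (8 * 6) by ring.
    eapply Rle_trans; [|apply (Rmult_le_compat_l 8 _ _ ltac:(lra) (pot_bound T))].
    rewrite <- ssum_scal. apply ssum_le. intros t _. unfold b. rewrite INR_odd, INR_even.
    pose proof (Hf_le t (2 * t) ltac:(lia)). pose proof (Hf_le t (S (2 * t)) ltac:(lia)).
    pose proof (Hf_nonneg (2 * t)). pose proof (Hf_nonneg (S (2 * t))).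
    pose proof (pos_INR t). pose proof (Hs_nonneg (S t)).
    assert (E1 : Hf (2 * t) ^ 2 <= 4 * Hs (S t) ^ 2).
    { replace (4 * Hs (S t) ^ 2) with ((2 * Hs (S t)) ^ 2) by ring. apply pow_incr. lra. }
    assert (E2 : Hf (S (2 * t)) ^ 2 <= 4 * Hs (S t) ^ 2).
    { replace (4 * Hs (S t) ^ 2) with ((2 * Hs (S t)) ^ 2) by ring. apply pow_incr. lra. }
    assert (E3 : / (2 * INR t + 2) ^ 2 <= / (2 * INR t + 1) ^ 2).
    { apply Rinv_le_contravar. apply pow_lt; lra. apply pow_incr; lra. }
    assert (0 < / (2 * INR t + 1) ^ 2) by (apply Rinv_0_lt_compat, pow_lt; lra).
    assert (0 < / (2 * INR t + 2) ^ 2) by (apply Rinv_0_lt_compat, pow_lt; lra).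
    unfold Rdiv.
    assert (/ (2 * INR t + 1) ^ 2 * Hf (2 * t) ^ 2 <= / (2 * INR t + 1) ^ 2 * (4 * Hs (S t) ^ 2))
      by (apply Rmult_le_compat_l; lra).
    assert (/ (2 * INR t + 2) ^ 2 * Hf (S (2 * t)) ^ 2 <= / (2 * INR t + 1) ^ 2 * (4 * Hs (S t) ^ 2)).
    { apply Rmult_le_compat; try lra. apply pow2_ge_0. }
    nra. }
  assert (Exb : ex_series b).
  { assert (E : exists l : R, is_lim_seq (sum_n b) l).
    { apply (incr_bounded_lim _ 48).
      - intros n. rewrite !sum_n_Reals, !sfr_ssum. rewrite (ssum_S _ (S n)). specialize (Hb0 (S n)). lra.
      - intros n. rewrite sum_n_Reals, sfr_ssum. eapply Rle_trans; [|apply (Hbb (S n))].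
        apply ssum_mono; auto. lia. }
    destruct E as [l Hl]. exists l. exact Hl. }
  assert (Exa : ex_series a) by (apply (ex_series_le a b); auto).
  destruct Exa as [l Hl]. exists l.
  apply is_lim_seq_incr_1. apply is_lim_seq_ext with (sum_n a).
  { intros N. rewrite sum_n_Reals, sfr_ssum. rewrite nsum_cons. reflexivity. }
  exact Hl.
Qed.

Definition Aev (t : nat) : R := ssum (fun t2 => Hs t2 / (2 * INR t2 + 1)) (S t).
Definition Z2s w T := ssum (fun t => / (2 * INR t + 2) ^ (w - 2) * Aev t) T.

Definition Dd (j : nat) : R := ssum (fun i => (1 - (-1) ^ (S i)) / INR (S i)) j.
Definition KK (b : bool) (k : nat) : R := ssum (fun j => ef 1 b (S j) * Dd j) k.

Lemma m1_odd t : (-1) ^ (S (2 * t)) = -1.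
Proof. apply pow_1_odd. Qed.

Lemma m1_even t : (-1) ^ (S (S (2 * t))) = 1.
Proof. replace (S (S (2 * t))) with (2 * S t)%nat by lia. apply pow_1_even. Qed.

Lemma J_diff b k : nsum (ef 1 b :: ef 1 false :: nil) k - nsum (ef 1 b :: ef 1 true :: nil) k = KK b k.
Proof.
  rewrite !nsum_cons, <- ssum_minus. unfold KK. apply ssum_ext. intros j _.
  rewrite <- Rmult_minus_distr_l. f_equal. rewrite !nsum_cons, <- ssum_minus. unfold Dd.
  apply ssum_ext. intros i _. unfold ef. rewrite !nsum_nil, !pow_1. unfold Rdiv. ring.
Qed.

Lemma Dd_even t : Dd (2 * t) = 2 * Hs t.
Proof.
  unfold Dd, Hs. rewrite ssum_double, <- ssum_scal. apply ssum_ext. intros k _.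
  rewrite m1_odd, m1_even, INR_odd, INR_even. replace (S (S (2 * k))) with (S (S (2 * k))) by reflexivity.
  pose proof (INR_pos_lin k). field. lra.
Qed.

Lemma Dd_odd t : Dd (S (2 * t)) = 2 * Hs (S t).
Proof.
  unfold Dd. rewrite ssum_S. fold (Dd (2 * t)). rewrite Dd_even, Hs_S.
  rewrite m1_odd, INR_odd.
  pose proof (INR_pos_lin t). field. lra.
Qed.

Lemma KK_plus t : KK true (2 * t) + KK false (2 * t) = 4 * Aodd t.
Proof.
  unfold KK. rewrite <- ssum_plus, ssum_double. unfold Aodd. rewrite <- ssum_scal.
  apply ssum_ext. intros k _. rewrite Dd_even, Dd_odd. unfold ef.
  rewrite m1_odd, m1_even, INR_odd, INR_even. pose proof (INR_pos_lin k). pose proof (pos_INR k).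
  rewrite !pow_1. field. lra.
Qed.

Lemma KK_minus t : KK true (S (2 * t)) - KK false (S (2 * t)) = - 4 * Aev t.
Proof.
  unfold KK. rewrite <- ssum_minus, ssum_S, ssum_double. unfold Aev. rewrite ssum_S.
  rewrite Rmult_plus_distr_l, <- ssum_scal. f_equal.
  - apply ssum_ext. intros k _. rewrite Dd_even, Dd_odd. unfold ef.
    rewrite m1_odd, m1_even, INR_odd, INR_even. pose proof (INR_pos_lin k). pose proof (pos_INR k).
    rewrite !pow_1. field. lra.
  - rewrite Dd_even. unfold ef. rewrite m1_odd, INR_odd. pose proof (INR_pos_lin t).
    rewrite !pow_1. field. lra.
Qed.

Lemma Ecomb_fin w T :
  nsum (ef (w - 2) false :: ef 1 true :: ef 1 false :: nil) (2 * T)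
  - nsum (ef (w - 2) true :: ef 1 false :: ef 1 false :: nil) (2 * T)
  + nsum (ef (w - 2) true :: ef 1 false :: ef 1 true :: nil) (2 * T)
  - nsum (ef (w - 2) false :: ef 1 true :: ef 1 true :: nil) (2 * T)
  = 4 * (Z1s w T - Z2s w T).
Proof.
  rewrite !(nsum_cons (ef (w - 2) _)).
  rewrite <- !ssum_minus, <- ssum_plus, <- ssum_minus.
  rewrite (ssum_ext _ (fun k => ef (w - 2) false (S k) * KK true k - ef (w - 2) true (S k) * KK false k)).
  2:{ intros k _. rewrite <- J_diff, <- J_diff. ring. }
  rewrite ssum_double. unfold Z1s, Z2s. rewrite <- ssum_minus, <- ssum_scal.
  apply ssum_ext. intros t _.
  replace (ef (w - 2) false (S (2 * t)) * KK true (2 * t) - ef (w - 2) true (S (2 * t)) * KK false (2 * t))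
    with (/ (2 * INR t + 1) ^ (w - 2) * (KK true (2 * t) + KK false (2 * t))).
  2:{ unfold ef. rewrite m1_odd, INR_odd. unfold Rdiv. ring. }
  replace (ef (w - 2) false (S (S (2 * t))) * KK true (S (2 * t)) - ef (w - 2) true (S (S (2 * t))) * KK false (S (2 * t)))
    with (/ (2 * INR t + 2) ^ (w - 2) * (KK true (S (2 * t)) - KK false (S (2 * t)))).
  2:{ unfold ef. rewrite m1_even, INR_even. unfold Rdiv. ring. }
  rewrite KK_plus, KK_minus. ring.
Qed.


Lemma Aev_nonneg t : 0 <= Aev t.
Proof. unfold Aev. apply ssum_nonneg. intros. apply Rdiv_le_0_compat. apply Hs_nonneg. apply INR_pos_lin. Qed.

Lemma Aev_le t : Aev t <= Hs (S t) ^ 2.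
Proof.
  unfold Aev. apply Rle_trans with (ssum (fun k => Hs (S t) * / (2 * INR k + 1)) (S t)).
  - apply ssum_le. intros k Hk. unfold Rdiv. apply Rmult_le_compat_r.
    left; apply Rinv_0_lt_compat, INR_pos_lin. apply Hs_mono; lia.
  - rewrite ssum_scal. fold (Hs (S t)). simpl. lra.
Qed.

Lemma Z2_exists w : (4 <= w)%nat -> exists l : R, is_lim_seq (Z2s w) l.
Proof.
  intros Hw. apply (nonneg_series_lim _ 1).
  - intros t. apply Rmult_le_pos. left. apply Rinv_0_lt_compat, pow_lt. pose proof (pos_INR t). lra.
    apply Aev_nonneg.
  - intros t. rewrite Rmult_1_l. pose proof (pos_INR t).
    apply Rle_trans with (/ (2 * INR t + 1) ^ 2 * Hs (S t) ^ 2).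
    + apply Rmult_le_compat. left. apply Rinv_0_lt_compat, pow_lt. lra. apply Aev_nonneg.
      eapply Rle_trans. apply inv_pow_le; [lra|lia].
      apply Rinv_le_contravar. apply pow_lt; lra. apply pow_incr. lra. apply Aev_le.
    + unfold Rdiv. right. ring.
Qed.

Lemma Hs_sq t : Hs (S t) ^ 2 = 2 * Aev t + So_seq (S t).
Proof.
  induction t.
  - unfold Aev, So_seq. simpl. replace (Hs 0) with 0 by reflexivity. unfold Hs. simpl. field.
  - rewrite Hs_S. unfold Aev. rewrite ssum_S. fold (Aev t). unfold So_seq. rewrite ssum_S.
    fold (So_seq (S t)). replace (Aev t) with ((Hs (S t) ^ 2 - So_seq (S t)) / 2) by lra.
    pose proof (INR_pos_lin (S t)). field. lra.
Qed.

Lemma W_decomp w T : Ws w T = 2 * Z2s w T + Ys w T.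
Proof.
  unfold Ws, Z2s, Ys. rewrite <- ssum_scal, <- ssum_plus. apply ssum_ext. intros t _.
  rewrite Hs_sq. unfold Rdiv. ring.
Qed.

Lemma Euler_value w : (4 <= w)%nat ->
  Ezeta (((w - 2)%nat, false) :: (1%nat, true) :: (1%nat, false) :: nil)
  - Ezeta (((w - 2)%nat, true) :: (1%nat, false) :: (1%nat, false) :: nil)
  + Ezeta (((w - 2)%nat, true) :: (1%nat, false) :: (1%nat, true) :: nil)
  - Ezeta (((w - 2)%nat, false) :: (1%nat, true) :: (1%nat, true) :: nil)
  = 4 * (lim_of (Z1s w) - lim_of (Z2s w)).
Proof.
  intros Hw. rewrite !Ezeta_eq.
  destruct (E3_lim (w - 2) false true false ltac:(lia)) as [l1 H1].
  destruct (E3_lim (w - 2) true false false ltac:(lia)) as [l2 H2].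
  destruct (E3_lim (w - 2) true false true ltac:(lia)) as [l3 H3].
  destruct (E3_lim (w - 2) false true true ltac:(lia)) as [l4 H4].
  rewrite (nseries_lim _ l1 H1), (nseries_lim _ l2 H2), (nseries_lim _ l3 H3), (nseries_lim _ l4 H4).
  assert (HA : is_lim_seq (fun T => 4 * (Z1s w T - Z2s w T)) (l1 - l2 + l3 - l4)).
  { apply is_lim_seq_ext with (fun T =>
      nsum (ef (w - 2) false :: ef 1 true :: ef 1 false :: nil) (2 * T)
    - nsum (ef (w - 2) true :: ef 1 false :: ef 1 false :: nil) (2 * T)
    + nsum (ef (w - 2) true :: ef 1 false :: ef 1 true :: nil) (2 * T)
    - nsum (ef (w - 2) false :: ef 1 true :: ef 1 true :: nil) (2 * T)).
    { intros T. apply Ecomb_fin. }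
    apply lim_double in H1, H2, H3, H4.
    apply is_lim_seq_minus'; [apply is_lim_seq_plus'; [apply is_lim_seq_minus'|]|]; auto. }
  assert (HB : is_lim_seq (fun T => 4 * (Z1s w T - Z2s w T)) (4 * (lim_of (Z1s w) - lim_of (Z2s w)))).
  { apply is_lim_seq_scal_l with (lu := lim_of (Z1s w) - lim_of (Z2s w)).
    apply is_lim_seq_minus'; apply ex_lim_of. apply Z1_exists; auto. apply Z2_exists; auto. }
  assert (U := is_lim_seq_unique _ _ HA). rewrite (is_lim_seq_unique _ _ HB) in U.
  injection U. intros; lra.
Qed.

Theorem theorem5p5 (w : nat) (hw : (4 <= w)%nat) :
  let u := (w - 2)%nat in
  sum_f_R0 (fun a => sum_f_R0 (fun b => sum_f_R0 (fun c =>
      if (Nat.eqb (a + b + c) w && Nat.leb 2 a && Nat.leb 1 b && Nat.leb 1 c)%bool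
      then Tval (a :: b :: c :: nil) else 0) w) w) w
  = 2 / 3 * Tval (2%nat :: nil) * Tval (u :: nil) - 2 * Tval (u :: 2%nat :: nil)
    + 4 * ( Ezeta ((u, false) :: (1%nat, true) :: (1%nat, false) :: nil)
          - Ezeta ((u, true) :: (1%nat, false) :: (1%nat, false) :: nil)
          + Ezeta ((u, true) :: (1%nat, false) :: (1%nat, true) :: nil)
          - Ezeta ((u, false) :: (1%nat, true) :: (1%nat, true) :: nil)).
Proof.
  intros u. unfold u.
  rewrite LHS_value by auto.
  rewrite T2_value, Tu_value, Tu2_value by auto.
  replace (Ezeta (((w - 2)%nat, false) :: (1%nat, true) :: (1%nat, false) :: nil)
          - Ezeta (((w - 2)%nat, true) :: (1%nat, false) :: (1%nat, false) :: nil)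
          + Ezeta (((w - 2)%nat, true) :: (1%nat, false) :: (1%nat, true) :: nil)
          - Ezeta (((w - 2)%nat, false) :: (1%nat, true) :: (1%nat, true) :: nil))
    with (4 * (lim_of (Z1s w) - lim_of (Z2s w))) by (symmetry; apply Euler_value; auto).
  assert (HW : lim_of (Ws w) = 2 * lim_of (Z2s w) + lim_of (Ys w)).
  { apply lim_of_correct. apply is_lim_seq_ext with (fun T => 2 * Z2s w T + Ys w T).
    intros; symmetry; apply W_decomp.
    apply is_lim_seq_plus'. apply is_lim_seq_scal_l with (lu := lim_of (Z2s w)).
    apply ex_lim_of, Z2_exists; auto. apply ex_lim_of, Y_exists; auto. }
  rewrite HW. field.
Qed.
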